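(* Assume (A1) and (A2). Then for all $\mathbf{z}\in\mathbb{W}(b^* )^2$ and $\boldsymbol\vartheta\in I_{2\pi}^2$, $$|d(\mathbf{z},\boldsymbol\vartheta)|\ge C_1(\zeta(\boldsymbol\vartheta))^2.$$
   Context: $I_{2\pi}=[0,2\pi)$. Let $\Gamma=[\gamma_0,\gamma_1,\gamma_2]^T:\mathbb{R}^2\to\mathbb{R}^3$ have $2\pi$-biperiodic differentiable components, with $\Gamma|_{I_{2\pi}^2}$ parametrizing the boundary of a bounded open region in $\mathbb{R}^3$ that is $C^\infty$-diffeomorphic to a torus. For $\mathbf{a}\in\mathbb{C}^m$, $\|\mathbf{a}\|_2=(\sum_j|a_j|^2)^{1/2}$; for a matrix, $\|\cdot\|_2$ is the induced operator norm. For $\boldsymbol\theta\in\mathbb{R}^2$, $\zeta(\boldsymbol\theta)=\sqrt{\mathrm{dist}(\theta_0,2\pi\mathbb{Z})^2+\mathrm{dist}(\theta_1,2\pi\mathbb{Z})^2}$ (for $\boldsymbol\theta\in I_{2\pi}^2$ this is $\sqrt{(\min\{\theta_0,2\pi-\theta_0\})^2+(\min\{\theta_1,2\pi-\theta_1\})^2}$). For $r>0$, $\mathbb{W}(r)=\{z\in\mathbb{C}:|\mathrm{Im}\,z|<r\}$. (A1): there is $C_0>0$ with $\|\Gamma(\boldsymbol\theta)-\Gamma(\boldsymbol\eta)\|_2\ge C_0\zeta(\boldsymbol\theta-\boldsymbol\eta)$ for all $\boldsymbol\theta,\boldsymbol\eta\in I_{2\pi}^2$. (A2): there is $R_0>0$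 such that for each $j$ the ($2\pi$-biperiodic) function $\gamma_j$ extends analytically to the closure of $\mathbb{W}(R_0)^2\subset\mathbb{C}^2$ (extensions still denoted $\gamma_j$, $\Gamma$). For $\mathbf{z}=[z_0,z_1]$, $\mathrm{Re}(\mathbf{z})=[\mathrm{Re}\,z_0,\mathrm{Re}\,z_1]$; $D\gamma_j(\mathbf{z})=[\partial\gamma_j/\partial z_0,\partial\gamma_j/\partial z_1](\mathbf{z})$ is the complex gradient and $\mathbf{H}_j(\mathbf{z})$ the $2\times2$ matrix of complex second partial derivatives of $\gamma_j$. Let $M_{0,j}=\sup_{\mathbf{z}\in\mathbb{W}(R_0)^2}\|D\gamma_j(\mathbf{z})+D\gamma_j(\mathrm{Re}(\mathbf{z}))\|_2$, $M_{1,j}=\sup_{\mathbf{z}\in\mathbb{W}(R_0)^2}\|\mathbf{H}_j(\mathbf{z})\|_2$, $M_0=(\sum_{j=0}^2M_{0,j}^2)^{1/2}$, $M_1=(\sum_{j=0}^2M_{1,j}^2)^{1/2}$. Fix $b$ with $0<b<\min\{\frac{C_0^2}{\sqrt2M_0M_1},\frac{R_0}{2}\}$, let $b^*=\frac12\big(b+\min\{\frac{C_0^2}{\sqrt2M_0M_1},\frac{R_0}{2}\}\big)$ and $C_1=C_0^2-\sqrt2M_0M_1b^*$. For $\mathbf{z}\in\mathbb{W}(R_0)^2$ and $\boldsymbol\vartheta\in I_{2\pi}^2$, $d(\mathbf{z},\boldsymbol\vartheta)=\sum_{j=0}^2(\gamma_j(\mathbf{z})-\gamma_j(\mathbf{z}+\boldsymbol\vartheta))^2$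 (the analytic extension of $\|\Gamma(\boldsymbol\theta)-\Gamma(\boldsymbol\theta+\boldsymbol\vartheta)\|_2^2$). *)

(* Defs.v *)
From Stdlib Require Import Reals Lra.
From Coquelicot Require Import Coquelicot.
Open Scope R_scope.

Definition dist2piZ (t : R) : R :=
  real (Glb_Rbar (fun x => exists k : Z, x = Rabs (t - 2 * PI * IZR k))).

Definition zeta (t0 t1 : R) : R :=
  sqrt (dist2piZ t0 ^ 2 + dist2piZ t1 ^ 2).

Definition inW (r : R) (z : C) : Prop := Rabs (Im z) < r.
Definition inWcl (r : R) (z : C) : Prop := Rabs (Im z) <= r.

Definition vnorm2 (a b : C) : R := sqrt (Cmod a ^ 2 + Cmod b ^ 2).

Definition mxnorm2 (p q r s : C) : R :=
  real (Lub_Rbar (fun x => exists v0 v1 : C, vnorm2 v0 v1 = 1 /\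
     x = vnorm2 (p * v0 + q * v1)%C (r * v0 + s * v1)%C)).

Definition openC2 (U : C -> C -> Prop) : Prop :=
  forall z0 z1, U z0 z1 -> exists eps, 0 < eps /\
    forall w0 w1, Cmod (w0 - z0)%C < eps -> Cmod (w1 - z1)%C < eps -> U w0 w1.

Definition cdiff2_on (U : C -> C -> Prop) (f a b : C -> C -> C) : Prop :=
  forall z0 z1, U z0 z1 -> forall eps, 0 < eps -> exists delta, 0 < delta /\
    forall h0 h1 : C, Cmod h0 < delta -> Cmod h1 < delta ->
      Cmod (f (z0 + h0)%C (z1 + h1)%C - f z0 z1 - a z0 z1 * h0 - b z0 z1 * h1)%C
        <= eps * (Cmod h0 + Cmod h1).

Definition M0j (R0 : R) (D0 D1 : C -> C -> C) : R :=
  real (Lub_Rbar (fun x => exists z0 z1, inW R0 z0 /\ inW R0 z1 /\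
     x = vnorm2 (D0 z0 z1 + D0 (RtoC (Re z0)) (RtoC (Re z1)))%C
                (D1 z0 z1 + D1 (RtoC (Re z0)) (RtoC (Re z1)))%C)).

(* M_{1,j}; H k l is d^2 gamma_j / dz_k dz_l *)
Definition M1j (R0 : R) (H : nat -> nat -> C -> C -> C) : R :=
  real (Lub_Rbar (fun x => exists z0 z1, inW R0 z0 /\ inW R0 z1 /\
     x = mxnorm2 (H 0%nat 0%nat z0 z1) (H 0%nat 1%nat z0 z1)
                 (H 1%nat 0%nat z0 z1) (H 1%nat 1%nat z0 z1))).

Definition Mbig0 (R0 : R) (D : nat -> nat -> C -> C -> C) : R :=
  sqrt (M0j R0 (D 0%nat 0%nat) (D 0%nat 1%nat) ^ 2
      + M0j R0 (D 1%nat 0%nat) (D 1%nat 1%nat) ^ 2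
      + M0j R0 (D 2%nat 0%nat) (D 2%nat 1%nat) ^ 2).

Definition Mbig1 (R0 : R) (H : nat -> nat -> nat -> C -> C -> C) : R :=
  sqrt (M1j R0 (H 0%nat) ^ 2 + M1j R0 (H 1%nat) ^ 2 + M1j R0 (H 2%nat) ^ 2).

Definition bmax (C0 R0 m0 m1 : R) : R :=
  Rmin (C0 ^ 2 / (sqrt 2 * m0 * m1)) (R0 / 2).

Definition bstar (b C0 R0 m0 m1 : R) : R := (b + bmax C0 R0 m0 m1) / 2.

Definition Cone (b C0 R0 m0 m1 : R) : R :=
  C0 ^ 2 - sqrt 2 * m0 * m1 * bstar b C0 R0 m0 m1.

Definition gam (G : nat -> C -> C -> C) (j : nat) (t0 t1 : R) : R :=
  Re (G j (RtoC t0) (RtoC t1)).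

Definition gdist (G : nat -> C -> C -> C) (t0 t1 s0 s1 : R) : R :=
  sqrt ((gam G 0 t0 t1 - gam G 0 s0 s1) ^ 2
      + (gam G 1 t0 t1 - gam G 1 s0 s1) ^ 2
      + (gam G 2 t0 t1 - gam G 2 s0 s1) ^ 2).

Definition dfun (G : nat -> C -> C -> C) (z0 z1 : C) (t0 t1 : R) : C :=
  ((G 0%nat z0 z1 - G 0%nat (z0 + RtoC t0) (z1 + RtoC t1)) ^ 2
 + (G 1%nat z0 z1 - G 1%nat (z0 + RtoC t0) (z1 + RtoC t1)) ^ 2
 + (G 2%nat z0 z1 - G 2%nat (z0 + RtoC t0) (z1 + RtoC t1)) ^ 2)%C.

Definition inI2pi (t : R) : Prop := 0 <= t < 2 * PI.

(* Main.v *)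
Require Import Defs.
From Stdlib Require Import Reals Lra Psatz Classical ClassicalEpsilon ZArith.
From Coquelicot Require Import Coquelicot.
Open Scope R_scope.


Lemma is_RInt_Cmult (h : R -> C) a b (l : C) (al : C) :
  is_RInt h a b l -> is_RInt (fun t => al * h t)%C a b (al * l)%C.
Proof.
  intros H.
  pose proof (is_RInt_fct_extend_fst _ _ _ _ H) as H1.
  pose proof (is_RInt_fct_extend_snd _ _ _ _ H) as H2.
  apply (is_RInt_fct_extend_pair (U:=R_NormedModule) (V:=R_NormedModule)).
  - simpl.
    pose proof (is_RInt_minus _ _ _ _ _ _ (is_RInt_scal _ _ _ (fst al) _ H1) (is_RInt_scal _ _ _ (snd al) _ H2)) as H3.
    eapply is_RInt_ext; [|exact H3]. intros x _. simpl. unfold minus, plus, opp, scal; simpl.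
    unfold mult; simpl. ring.
  - simpl.
    pose proof (is_RInt_plus _ _ _ _ _ _ (is_RInt_scal _ _ _ (fst al) _ H2) (is_RInt_scal _ _ _ (snd al) _ H1)) as H3.
    eapply is_RInt_ext; [|exact H3]. intros x _. simpl. unfold minus, plus, opp, scal; simpl.
    unfold mult; simpl. ring.
Qed.

Lemma normC (x : C) : @norm R_AbsRing C_R_NormedModule x = Cmod x.
Proof. unfold norm; simpl. unfold prod_norm, Cmod; simpl. unfold norm; simpl. unfold abs; simpl.
 destruct x as [a b]; simpl. f_equal; rewrite !Rmult_1_r, <- !Rabs_mult, !Rabs_pos_eq; nra. Qed.

Definition ctnR (g : R -> C) (t : R) : Prop := forall eps, 0 < eps -> exists delta, 0 < delta /\
  forall t', Rabs (t' - t) < delta -> Cmod (g t' - g t)%C < eps.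

Lemma im_le_Cmod (c : C) : Rabs (Im c) <= Cmod c.
Proof. destruct c as [a b]. unfold Cmod; simpl. rewrite <- sqrt_Rsqr_abs. apply sqrt_le_1_alt. unfold Rsqr. nra. Qed.

Lemma ctnR_ex_RInt (g : R -> C) a b : a <= b -> (forall t, a <= t <= b -> ctnR g t) -> ex_RInt g a b.
Proof.
  intros Hab H. apply (@ex_RInt_continuous C_R_CompleteNormedModule). intros z Hz.
  rewrite Rmin_left in Hz by lra. rewrite Rmax_right in Hz by lra.
  apply filterlim_locally. intros eps.
  destruct (H z Hz eps (cond_pos eps)) as [d [Hd Hd']].
  exists (mkposreal d Hd). intros y Hy. simpl in Hy. unfold ball in Hy; simpl in Hy. unfold AbsRing_ball in Hy.
  specialize (Hd' y Hy).
  split; unfold ball; simpl; unfold AbsRing_ball; simpl; unfold abs, minus, plus, opp; simpl.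
  - eapply Rle_lt_trans; [|exact Hd']. pose proof (re_le_Cmod (g y - g z)%C) as HH. simpl in HH. exact HH.
  - eapply Rle_lt_trans; [|exact Hd']. pose proof (im_le_Cmod (g y - g z)%C) as HH. simpl in HH. exact HH.
Qed.

Definition hol_at (f : C -> C) (d z : C) : Prop :=
  forall eps, 0 < eps -> exists delta, 0 < delta /\ forall h, Cmod h < delta ->
    Cmod (f (z + h) - f z - d * h)%C <= eps * Cmod h.

Definition ctnC (f : C -> C) (z : C) : Prop := forall eps, 0 < eps -> exists delta, 0 < delta /\
  forall h, Cmod h < delta -> Cmod (f (z + h) - f z)%C < eps.

Lemma hol_ctn f d z : hol_at f d z -> ctnC f z.
Proof.
  intros H eps Heps.
  destruct (H 1 Rlt_0_1) as [d1 [Hd1 Hd1']].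
  pose proof (Cmod_ge_0 d) as Hd.
  exists (Rmin d1 (eps / (Cmod d + 2))). split.
  { apply Rmin_pos; auto. apply Rdiv_lt_0_compat; lra. }
  intros h Hh. pose proof (Rmin_l d1 (eps / (Cmod d + 2))). pose proof (Rmin_r d1 (eps / (Cmod d + 2))).
  specialize (Hd1' h ltac:(lra)).
  replace (f (z + h) - f z)%C with ((f (z + h) - f z - d * h) + d * h)%C by ring.
  eapply Rle_lt_trans; [apply Cmod_triangle|]. rewrite Cmod_mult.
  pose proof (Cmod_ge_0 h).
  assert (Cmod h * (Cmod d + 2) < eps).
  { assert (Cmod h < eps / (Cmod d + 2)) by lra.
    apply (Rmult_lt_compat_r (Cmod d + 2)) in H3; [|lra].
    unfold Rdiv in H3. rewrite Rmult_assoc, Rinv_l in H3 by lra. lra. }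
  nra.
Qed.

Definition Sd (f : C -> C) (x y ex ey s : R) : C :=
  @RInt C_R_CompleteNormedModule (fun t => f (x + t * ex, y + t * ey)) 0 s.

Lemma Cmod_pair_le (a b : R) : Cmod (a, b) <= Rabs a + Rabs b.
Proof.
  unfold Cmod; simpl. rewrite <- (sqrt_Rsqr (Rabs a + Rabs b)) by (pose proof (Rabs_pos a); pose proof (Rabs_pos b); lra).
  apply sqrt_le_1_alt. unfold Rsqr. pose proof (Rabs_pos a); pose proof (Rabs_pos b).
  rewrite !Rmult_1_r. pose proof (pow2_abs a); pose proof (pow2_abs b). simpl in *. nra.
Qed.

Lemma ctn_line f x y ex ey t0 : Rabs ex <= 1 -> Rabs ey <= 1 ->
  ctnC f (x + t0 * ex, y + t0 * ey) -> ctnR (fun t => f (x + t * ex, y + t * ey)) t0.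
Proof.
  intros Hx Hy H eps Heps. destruct (H eps Heps) as [d [Hd Hd']].
  exists (d / 2). split; [lra|]. intros t' Ht'.
  specialize (Hd' ((t' - t0) * ex, (t' - t0) * ey)).
  replace (x + t' * ex, y + t' * ey) with (Cplus (x + t0 * ex, y + t0 * ey) ((t' - t0) * ex, (t' - t0) * ey)).
  2:{ unfold Cplus; simpl. f_equal; ring. }
  apply Hd'. eapply Rle_lt_trans; [apply Cmod_pair_le|]. rewrite !Rabs_mult.
  pose proof (Rabs_pos (t' - t0)). pose proof (Rabs_pos ex). pose proof (Rabs_pos ey). nra.
Qed.

Lemma Sd_split f x y ex ey s1 s2 : 0 <= s1 -> 0 <= s2 -> Rabs ex <= 1 -> Rabs ey <= 1 ->
  (forall t, 0 <= t <= s1 + s2 -> ctnC f (x + t * ex, y + t * ey)) ->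
  Sd f x y ex ey (s1 + s2) = (Sd f x y ex ey s1 + Sd f (x + s1 * ex) (y + s1 * ey) ex ey s2)%C.
Proof.
  intros H1 H2 Hx Hy H. unfold Sd.
  assert (E : forall a b, 0 <= a -> a <= b -> b <= s1 + s2 ->
     @ex_RInt C_R_NormedModule (fun t => f (x + t * ex, y + t * ey)) a b).
  { intros a b Ha Hab Hb. apply ctnR_ex_RInt; auto. intros t Ht. apply ctn_line; auto. apply H; lra. }
  rewrite <- (@RInt_Chasles C_R_CompleteNormedModule _ 0 s1 (s1 + s2)) by (apply E; lra).
  pose proof (@RInt_comp_lin C_R_CompleteNormedModule (fun t => f (x + t * ex, y + t * ey)) 1 s1 0 s2) as HL.
  replace (1 * 0 + s1) with s1 in HL by ring. replace (1 * s2 + s1) with (s1 + s2) in HL by ring.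
  rewrite <- HL by (apply E; lra).
  match goal with |- plus ?a ?b = _ => change (plus a b) with (Cplus a b) end.
  f_equal. apply RInt_ext. intros t _. unfold scal; simpl.
  unfold scal; simpl. 
  replace (x + (1 * t + s1) * ex) with (x + s1 * ex + t * ex) by ring.
  replace (y + (1 * t + s1) * ey) with (y + s1 * ey + t * ey) by ring.
  destruct (f _) as [u v]. unfold prod_scal; simpl. unfold scal; simpl. unfold mult; simpl. f_equal; ring.
Qed.

Definition Bint (f : C -> C) (x y s : R) : C :=
  (Sd f x y 1 0 s + Ci * Sd f (x + s) y 0 1 s - Sd f x (y + s) 1 0 s - Ci * Sd f x y 0 1 s)%C.

Definition SqCtn (f : C -> C) (x y S : R) : Prop :=
  forall u v, x <= u <= x + S -> y <= v <= y + S -> ctnC f (u, v).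

Lemma Rabs1 : Rabs 1 <= 1. Proof. rewrite Rabs_R1; lra. Qed.
Lemma Rabs0 : Rabs 0 <= 1. Proof. rewrite Rabs_R0; lra. Qed.

Ltac sidec HS := intros ? ?; apply HS; lra.

Lemma Sd_split_h f x y s1 s2 : 0 <= s1 -> 0 <= s2 ->
  (forall t, 0 <= t <= s1 + s2 -> ctnC f (x + t, y)) ->
  Sd f x y 1 0 (s1 + s2) = (Sd f x y 1 0 s1 + Sd f (x + s1) y 1 0 s2)%C.
Proof.
  intros H1 H2 H. rewrite Sd_split; auto using Rabs1, Rabs0.
  - rewrite Rmult_1_r, Rmult_0_r, Rplus_0_r. reflexivity.
  - intros t Ht. rewrite Rmult_1_r, Rmult_0_r, Rplus_0_r. auto.
Qed.

Lemma Sd_split_v f x y s1 s2 : 0 <= s1 -> 0 <= s2 ->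
  (forall t, 0 <= t <= s1 + s2 -> ctnC f (x, y + t)) ->
  Sd f x y 0 1 (s1 + s2) = (Sd f x y 0 1 s1 + Sd f x (y + s1) 0 1 s2)%C.
Proof.
  intros H1 H2 H. rewrite Sd_split; auto using Rabs1, Rabs0.
  - rewrite Rmult_1_r, Rmult_0_r, Rplus_0_r. reflexivity.
  - intros t Ht. rewrite Rmult_1_r, Rmult_0_r, Rplus_0_r. auto.
Qed.

Lemma Bint_split2 f x y s : 0 <= s -> SqCtn f x y (s + s) ->
  Bint f x y (s + s) = (Bint f x y s + Bint f (x + s) y s + Bint f x (y + s) s + Bint f (x + s) (y + s) s)%C.
Proof.
  intros Hs HS. unfold Bint.
  rewrite (Sd_split_h f x y s s) by (auto; intros t Ht; apply HS; lra).
  rewrite (Sd_split_v f (x + (s + s)) y s s) by (auto; intros t Ht; apply HS; lra).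
  rewrite (Sd_split_h f x (y + (s + s)) s s) by (auto; intros t Ht; apply HS; lra).
  rewrite (Sd_split_v f x y s s) by (auto; intros t Ht; apply HS; lra).
  replace (x + (s + s)) with (x + s + s) by ring.
  replace (y + (s + s)) with (y + s + s) by ring.
  ring.
Qed.

Lemma Bint_split3 f x y s : 0 <= s -> SqCtn f x y (s + s + s) ->
  Bint f x y (s + s + s) = (Bint f x y s + Bint f (x + s) y s + Bint f (x + s + s) y s
    + Bint f x (y + s) s + Bint f (x + s) (y + s) s + Bint f (x + s + s) (y + s) s
    + Bint f x (y + s + s) s + Bint f (x + s) (y + s + s) s + Bint f (x + s + s) (y + s + s) s)%C.
Proof.
  intros Hs HS. unfold Bint.
  rewrite (Sd_split_h f x y (s + s) s) by (auto; try lra; intros t Ht; apply HS; lra).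
  rewrite (Sd_split_h f x y s s) by (auto; try lra; intros t Ht; apply HS; lra).
  rewrite (Sd_split_v f (x + (s + s + s)) y (s + s) s) by (auto; try lra; intros t Ht; apply HS; lra).
  rewrite (Sd_split_v f (x + (s + s + s)) y s s) by (auto; try lra; intros t Ht; apply HS; lra).
  rewrite (Sd_split_h f x (y + (s + s + s)) (s + s) s) by (auto; try lra; intros t Ht; apply HS; lra).
  rewrite (Sd_split_h f x (y + (s + s + s)) s s) by (auto; try lra; intros t Ht; apply HS; lra).
  rewrite (Sd_split_v f x y (s + s) s) by (auto; try lra; intros t Ht; apply HS; lra).
  rewrite (Sd_split_v f x y s s) by (auto; try lra; intros t Ht; apply HS; lra).
  replace (x + (s + s + s)) with (x + s + s + s) by ring.
  replace (y + (s + s + s)) with (y + s + s + s) by ring.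
  replace (x + (s + s)) with (x + s + s) by ring.
  replace (y + (s + s)) with (y + s + s) by ring.
  ring.
Qed.

Definition bd (f : C -> C) (x y s t : R) : C :=
  Cminus (Cminus (Cplus (f (x + t, y)) (Cmult Ci (f (x + s, y + t)))) (f (x + t, y + s))) (Cmult Ci (f (x, y + t))).

Lemma Sd_is_RInt f x y ex ey s : 0 <= s -> Rabs ex <= 1 -> Rabs ey <= 1 ->
  (forall t, 0 <= t <= s -> ctnC f (x + t * ex, y + t * ey)) ->
  @is_RInt C_R_NormedModule (fun t => f (x + t * ex, y + t * ey)) 0 s (Sd f x y ex ey s).
Proof.
  intros Hs Hx Hy H. unfold Sd. apply (@RInt_correct C_R_CompleteNormedModule).
  apply ctnR_ex_RInt; auto. intros t Ht. apply ctn_line; auto.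
Qed.

Lemma Bint_is_RInt f x y s : 0 <= s -> SqCtn f x y s ->
  @is_RInt C_R_NormedModule (bd f x y s) 0 s (Bint f x y s).
Proof.
  intros Hs HS.
  assert (I1 := Sd_is_RInt f x y 1 0 s Hs Rabs1 Rabs0 ltac:(intros t Ht; apply HS; lra)).
  assert (I2 := Sd_is_RInt f (x + s) y 0 1 s Hs Rabs0 Rabs1 ltac:(intros t Ht; apply HS; lra)).
  assert (I3 := Sd_is_RInt f x (y + s) 1 0 s Hs Rabs1 Rabs0 ltac:(intros t Ht; apply HS; lra)).
  assert (I4 := Sd_is_RInt f x y 0 1 s Hs Rabs0 Rabs1 ltac:(intros t Ht; apply HS; lra)).
  apply (is_RInt_Cmult _ _ _ _ Ci) in I2. apply (is_RInt_Cmult _ _ _ _ Ci) in I4.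
  pose proof (is_RInt_minus _ _ _ _ _ _ (is_RInt_minus _ _ _ _ _ _ (is_RInt_plus _ _ _ _ _ _ I1 I2) I3) I4) as I.
  unfold Bint. eapply is_RInt_ext; [|exact I].
  intros t _. unfold bd. rewrite !Rmult_1_r, !Rmult_0_r, !Rplus_0_r. reflexivity.
Qed.

Definition holS (f : C -> C) (x y S : R) : Prop :=
  forall u v, x <= u <= x + S -> y <= v <= y + S -> exists d, hol_at f d (u, v).

Lemma holS_ctn f x y S : holS f x y S -> SqCtn f x y S.
Proof. intros H u v Hu Hv. destruct (H u v Hu Hv) as [d Hd]. eapply hol_ctn; eauto. Qed.

Lemma bd_affine f x y s t (al be p : C) :
  bd f x y s t = bd (fun z => f z - al - be * (z - p))%C x y s t.
Proof.
  unfold bd.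
  generalize (f (x + t, y)) (f (x + s, y + t)) (f (x + t, y + s)) (f (x, y + t)).
  intros [a1 a2] [b1 b2] [c1 c2] [d1 d2]. destruct al as [l1 l2], be as [m1 m2], p as [p1 p2].
  unfold Cminus, Cplus, Cmult, Copp, Ci; simpl. f_equal; ring.
Qed.

Lemma Cmod_sub_pair_le (u v p1 p2 : R) : Cmod ((u, v) - (p1, p2))%C <= Rabs (u - p1) + Rabs (v - p2).
Proof.
  replace ((u, v) - (p1, p2))%C with ((u - p1)%R, (v - p2)%R) by (unfold Cminus, Cplus, Copp; simpl; f_equal; ring).
  apply Cmod_pair_le.
Qed.

Lemma Cmod_Ci_mult z : Cmod (Ci * z)%C = Cmod z.
Proof. rewrite Cmod_mult, Cmod_Ci. ring. Qed.

Lemma bd_bound f x y s t M : 0 <= t <= s ->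
  (forall u v, x <= u <= x + s -> y <= v <= y + s -> Cmod (f (u, v)) <= M) ->
  Cmod (bd f x y s t) <= 4 * M.
Proof.
  intros Ht H. unfold bd.
  assert (A1 := H (x + t) y ltac:(lra) ltac:(lra)).
  assert (A2 := H (x + s) (y + t) ltac:(lra) ltac:(lra)).
  assert (A3 := H (x + t) (y + s) ltac:(lra) ltac:(lra)).
  assert (A4 := H x (y + t) ltac:(lra) ltac:(lra)).
  unfold Cminus.
  eapply Rle_trans; [apply Cmod_triangle|]. rewrite Cmod_opp, Cmod_Ci_mult.
  eapply Rle_trans; [apply Rplus_le_compat_r; apply Cmod_triangle|]. rewrite Cmod_opp.
  eapply Rle_trans; [apply Rplus_le_compat_r; apply Rplus_le_compat_r; apply Cmod_triangle|]. rewrite Cmod_Ci_mult.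
  lra.
Qed.

Lemma Bint_bound f x y s M : 0 <= s -> SqCtn f x y s ->
  (forall u v, x <= u <= x + s -> y <= v <= y + s -> Cmod (f (u, v)) <= M) ->
  Cmod (Bint f x y s) <= s * (4 * M).
Proof.
  intros Hs HS H. pose proof (Bint_is_RInt f x y s Hs HS) as I.
  rewrite <- normC. replace s with (s - 0) at 2 by ring.
  apply (norm_RInt_le_const (bd f x y s) 0 s _ _ Hs); auto.
  intros t Ht. rewrite normC. apply bd_bound; auto.
Qed.

Lemma Bint_bound_aff f x y s M al be p : 0 <= s -> SqCtn f x y s ->
  (forall u v, x <= u <= x + s -> y <= v <= y + s -> Cmod (f (u, v) - al - be * ((u, v) - p))%C <= M) ->
  Cmod (Bint f x y s) <= s * (4 * M).
Proof.
  intros Hs HS H. pose proof (Bint_is_RInt f x y s Hs HS) as I.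
  assert (I' : @is_RInt C_R_NormedModule (bd (fun z => f z - al - be * (z - p))%C x y s) 0 s (Bint f x y s)).
  { eapply is_RInt_ext; [|exact I]. intros t _. apply bd_affine. }
  rewrite <- normC. replace s with (s - 0) at 2 by ring.
  apply (norm_RInt_le_const (bd (fun z => f z - al - be * (z - p))%C x y s) 0 s _ _ Hs); auto.
  intros t Ht. rewrite normC. apply bd_bound; auto.
Qed.

Section Goursat.
Variable f : C -> C.

Definition pick (c : R * R) (h : R) : R * R :=
  let (a, b) := c in
  if Rle_dec (Cmod (Bint f a b (h + h))) (4 * Cmod (Bint f a b h)) then (a, b)
  else if Rle_dec (Cmod (Bint f a b (h + h))) (4 * Cmod (Bint f (a + h) b h)) then (a + h, b)
  else if Rle_dec (Cmod (Bint f a b (h + h))) (4 * Cmod (Bint f a (b + h) h)) then (a, b + h)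
  else (a + h, b + h).

Lemma pick_prop a b h : 0 <= h -> SqCtn f a b (h + h) ->
  Cmod (Bint f a b (h + h)) <= 4 * Cmod (Bint f (fst (pick (a, b) h)) (snd (pick (a, b) h)) h) /\
  a <= fst (pick (a, b) h) <= a + h /\ b <= snd (pick (a, b) h) <= b + h.
Proof.
  intros Hh HS. pose proof (Bint_split2 f a b h Hh HS) as E.
  unfold pick.
  destruct (Rle_dec _ _) as [H1|H1]; [simpl; repeat split; lra|].
  destruct (Rle_dec _ _) as [H2|H2]; [simpl; repeat split; lra|].
  destruct (Rle_dec _ _) as [H3|H3]; [simpl; repeat split; lra|].
  simpl. split; [|repeat split; lra].
  rewrite E in *.
  set (B1 := Bint f a b h) in *. set (B2 := Bint f (a + h) b h) in *.
  set (B3 := Bint f a (b + h) h) in *. set (B4 := Bint f (a + h) (b + h) h) in *.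
  assert (T : Cmod (B1 + B2 + B3 + B4)%C <= Cmod B1 + Cmod B2 + Cmod B3 + Cmod B4).
  { eapply Rle_trans; [apply Cmod_triangle|].
    eapply Rle_trans; [apply Rplus_le_compat_r; apply Cmod_triangle|].
    eapply Rle_trans; [apply Rplus_le_compat_r; apply Rplus_le_compat_r; apply Cmod_triangle|]. lra. }
  lra.
Qed.

Variables (x y L : R).

Definition sn (n : nat) := L / 2 ^ n.

Fixpoint corner (n : nat) : R * R :=
  match n with
  | O => (x, y)
  | S m => pick (corner m) (sn (S m))
  end.

Hypothesis HL : 0 < L.
Hypothesis Hhol : holS f x y L.

Lemma sn_pos n : 0 < sn n.
Proof. unfold sn. apply Rdiv_lt_0_compat; auto. apply pow_lt; lra. Qed.

Lemma sn_S n : sn (S n) + sn (S n) = sn n.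
Proof. unfold sn. simpl. field. apply pow_nonzero. lra. Qed.

Lemma SqCtn_sub a b s : x <= a -> a + s <= x + L -> y <= b -> b + s <= y + L -> SqCtn f a b s.
Proof. intros. apply holS_ctn in Hhol. intros u v Hu Hv. apply Hhol; lra. Qed.

Lemma corner_prop n :
  x <= fst (corner n) /\ fst (corner n) + sn n <= x + L /\ y <= snd (corner n) /\ snd (corner n) + sn n <= y + L /\ fst (corner n) <= fst (corner (S n)) /\ fst (corner (S n)) + sn (S n) <= fst (corner n) + sn n /\ snd (corner n) <= snd (corner (S n)) /\ snd (corner (S n)) + sn (S n) <= snd (corner n) + sn n /\ Cmod (Bint f (fst (corner n)) (snd (corner n)) (sn n)) <=
    4 * Cmod (Bint f (fst (corner (S n))) (snd (corner (S n))) (sn (S n))).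
Proof.
  assert (Hin : forall n, x <= fst (corner n) /\ fst (corner n) + sn n <= x + L /\ y <= snd (corner n) /\ snd (corner n) + sn n <= y + L).
  { clear n. intros n. induction n as [|n IH].
    - simpl. unfold sn. simpl. rewrite Rdiv_1_r. lra.
    - destruct IH as [A1 [A2 [A3 A4]]]. simpl corner.
      destruct (corner n) as [a b] eqn:Ec. cbn [fst snd] in *.
      pose proof (sn_S n) as E. pose proof (sn_pos (S n)).
      destruct (pick_prop a b (sn (S n)) ltac:(lra) ltac:(apply SqCtn_sub; lra)) as [_ [B1 B2]].
      lra. }
  destruct (Hin n) as [A1 [A2 [A3 A4]]].
  simpl corner. destruct (corner n) as [a b] eqn:Ec. cbn [fst snd] in *.
  pose proof (sn_S n) as E. pose proof (sn_pos (S n)).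
  destruct (pick_prop a b (sn (S n)) ltac:(lra) ltac:(apply SqCtn_sub; lra)) as [B0 [B1 B2]].
  rewrite E in B0.
  repeat (split; [lra|]). exact B0.
Qed.

Lemma mono_nat (g : nat -> R) : (forall n, g n <= g (S n)) -> forall m n, (m <= n)%nat -> g m <= g n.
Proof. intros H m n Hmn. induction Hmn; [lra|]. eapply Rle_trans; eauto. Qed.

Lemma est n : Cmod (Bint f x y L) <= (2 ^ n * 2 ^ n) * Cmod (Bint f (fst (corner n)) (snd (corner n)) (sn n)).
Proof.
  induction n as [|n IH].
  - simpl. unfold sn; simpl. rewrite Rdiv_1_r. lra.
  - destruct (corner_prop n) as [_ [_ [_ [_ [_ [_ [_ [_ H]]]]]]]].
    eapply Rle_trans; [exact IH|]. simpl pow.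
    assert (0 <= 2 ^ n * 2 ^ n) by (pose proof (pow_lt 2 n ltac:(lra)); nra).
    apply Rmult_le_compat_l with (r := 2 ^ n * 2 ^ n) in H; auto. lra.
Qed.

Lemma pow2_ge n : INR n <= 2 ^ n.
Proof. induction n as [|n IH]; [simpl; lra|]. rewrite S_INR. simpl. pose proof (pow_R1_Rle 2 n ltac:(lra)).
  lra. Qed.

Theorem goursat : Bint f x y L = 0%C.
Proof.
  set (E1 := fun r => exists n, r = fst (corner n)).
  set (E2 := fun r => exists n, r = snd (corner n)).
  assert (Ub1 : forall n m, fst (corner m) <= fst (corner n) + sn n).
  { intros n m. destruct (Nat.le_ge_cases m n) as [H|H].
    - pose proof (mono_nat (fun k => fst (corner k)) (fun k => proj1 (proj2 (proj2 (proj2 (proj2 (corner_prop k)))))) m n H).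
      pose proof (sn_pos n). simpl in *. lra.
    - pose proof (mono_nat (fun k => - (fst (corner k) + sn k)) (fun k => ltac:(pose proof (proj1 (proj2 (proj2 (proj2 (proj2 (proj2 (corner_prop k))))))); lra)) n m H).
      pose proof (sn_pos m). simpl in *. lra. }
  assert (Ub2 : forall n m, snd (corner m) <= snd (corner n) + sn n).
  { intros n m. destruct (Nat.le_ge_cases m n) as [H|H].
    - pose proof (mono_nat (fun k => snd (corner k)) (fun k => proj1 (proj2 (proj2 (proj2 (proj2 (proj2 (proj2 (corner_prop k)))))))) m n H).
      pose proof (sn_pos n). simpl in *. lra.
    - pose proof (mono_nat (fun k => - (snd (corner k) + sn k)) (fun k => ltac:(pose proof (proj1 (proj2 (proj2 (proj2 (proj2 (proj2 (proj2 (proj2 (corner_prop k))))))))); lra)) n m H).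
      pose proof (sn_pos m). simpl in *. lra. }
  destruct (completeness E1) as [p1 [Hp1a Hp1b]].
  { exists (x + L). intros r [n ->]. pose proof (corner_prop n). pose proof (sn_pos n). lra. }
  { exists (fst (corner 0)). exists 0%nat. reflexivity. }
  destruct (completeness E2) as [p2 [Hp2a Hp2b]].
  { exists (y + L). intros r [n ->]. pose proof (corner_prop n). pose proof (sn_pos n). lra. }
  { exists (snd (corner 0)). exists 0%nat. reflexivity. }
  assert (P1 : forall n, fst (corner n) <= p1 <= fst (corner n) + sn n).
  { intros n. split. apply Hp1a. exists n; auto. apply Hp1b. intros r [m ->]. apply Ub1. }
  assert (P2 : forall n, snd (corner n) <= p2 <= snd (corner n) + sn n).
  { intros n. split. apply Hp2a. exists n; auto. apply Hp2b. intros r [m ->]. apply Ub2. }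
  assert (Pin : x <= p1 <= x + L /\ y <= p2 <= y + L).
  { pose proof (P1 0%nat). pose proof (P2 0%nat). unfold sn in *; simpl in *. rewrite Rdiv_1_r in *. lra. }
  destruct (Hhol p1 p2 (proj1 Pin) (proj2 Pin)) as [d Hd].
  assert (Key : forall eps, 0 < eps -> Cmod (Bint f x y L) <= 8 * eps * (L * L)).
  { intros eps Heps. destruct (Hd eps Heps) as [delta [Hdelta Hdelta']].
    destruct (archimed_cor1 (delta / (2 * L))) as [N [HN1 HN2]].
    { apply Rdiv_lt_0_compat; lra. }
    assert (HsN : 2 * sn N < delta).
    { unfold sn. pose proof (pow2_ge N). assert (0 < INR N) by (apply lt_0_INR; lia).
      assert (L / 2 ^ N <= L / INR N). { apply Rmult_le_compat_l; [lra|]. apply Rinv_le_contravar; lra. }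
      assert (L / INR N < delta / 2).
      { apply (Rmult_lt_compat_l (2 * L)) in HN1; [|lra].
        replace (2 * L * (delta / (2 * L))) with delta in HN1 by (field; lra).
        unfold Rdiv. replace (L * / INR N) with (2 * L * / INR N / 2) by (field; lra). lra. }
      lra. }
    pose proof (est N) as HE.
    destruct (corner_prop N) as [A1 [A2 [A3 [A4 _]]]].
    pose proof (sn_pos N).
    assert (HB : Cmod (Bint f (fst (corner N)) (snd (corner N)) (sn N)) <= sn N * (4 * (eps * (2 * sn N)))).
    { apply (Bint_bound_aff f _ _ _ _ (f (p1, p2)) d (p1, p2)); [lra| apply SqCtn_sub; lra|].
      intros u v Hu Hv.
      assert (Hh : Cmod ((u, v) - (p1, p2))%C <= 2 * sn N).
      { eapply Rle_trans; [apply Cmod_sub_pair_le|]. pose proof (P1 N). pose proof (P2 N).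
        assert (Rabs (u - p1) <= sn N) by (apply Rabs_le; lra).
        assert (Rabs (v - p2) <= sn N) by (apply Rabs_le; lra). lra. }
      specialize (Hdelta' ((u, v) - (p1, p2))%C ltac:(lra)).
      replace ((p1, p2) + ((u, v) - (p1, p2)))%C with ((u, v) : C) in Hdelta' by (unfold Cplus, Cminus, Copp; simpl; f_equal; ring).
      eapply Rle_trans; [exact Hdelta'|]. apply Rmult_le_compat_l; lra. }
    eapply Rle_trans; [exact HE|].
    assert (0 <= 2 ^ N * 2 ^ N) by (pose proof (pow_lt 2 N ltac:(lra)); nra).
    apply Rmult_le_compat_l with (r := 2 ^ N * 2 ^ N) in HB; auto.
    eapply Rle_trans; [exact HB|].
    unfold sn. right. field. apply pow_nonzero; lra. }
  apply Cmod_eq_0. pose proof (Cmod_ge_0 (Bint f x y L)).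
  destruct (Req_dec (Cmod (Bint f x y L)) 0) as [Z|Z]; auto.
  specialize (Key (Cmod (Bint f x y L) / (16 * (L * L))) ltac:(apply Rdiv_lt_0_compat; nra)).
  replace (8 * (Cmod (Bint f x y L) / (16 * (L * L))) * (L * L)) with (Cmod (Bint f x y L) / 2) in Key by (field; lra).
  lra.
Qed.
End Goursat.


Definition BdP (P : C -> Prop) (x y S : R) : Prop :=
  forall t, 0 <= t <= S -> P (x + t, y) /\ P (x + S, y + t) /\ P (x + t, y + S) /\ P (x, y + t).

Ltac bdp HS := let t := fresh "t" in let Ht := fresh "Ht" in
  intros t Ht; rewrite ?Rmult_1_r, ?Rmult_0_r, ?Rplus_0_r;
  let A1 := fresh in let A2 := fresh in let A3 := fresh in let A4 := fresh in
  destruct (HS t ltac:(lra)) as [A1 [A2 [A3 A4]]]; assumption.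

Lemma Bint_split3B f x y s : 0 <= s -> BdP (ctnC f) x y (s + s + s) ->
  Bint f x y (s + s + s) = (Bint f x y s + Bint f (x + s) y s + Bint f (x + s + s) y s
    + Bint f x (y + s) s + Bint f (x + s) (y + s) s + Bint f (x + s + s) (y + s) s
    + Bint f x (y + s + s) s + Bint f (x + s) (y + s + s) s + Bint f (x + s + s) (y + s + s) s)%C.
Proof.
  intros Hs HS. unfold Bint.
  rewrite (Sd_split_h f x y (s + s) s) by (auto; try lra; bdp HS).
  rewrite (Sd_split_h f x y s s) by (auto; try lra; bdp HS).
  rewrite (Sd_split_v f (x + (s + s + s)) y (s + s) s) by (auto; try lra; bdp HS).
  rewrite (Sd_split_v f (x + (s + s + s)) y s s) by (auto; try lra; bdp HS).
  rewrite (Sd_split_h f x (y + (s + s + s)) (s + s) s) by (auto; try lra; bdp HS).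
  rewrite (Sd_split_h f x (y + (s + s + s)) s s) by (auto; try lra; bdp HS).
  rewrite (Sd_split_v f x y (s + s) s) by (auto; try lra; bdp HS).
  rewrite (Sd_split_v f x y s s) by (auto; try lra; bdp HS).
  replace (x + (s + s + s)) with (x + s + s + s) by ring.
  replace (y + (s + s + s)) with (y + s + s + s) by ring.
  replace (x + (s + s)) with (x + s + s) by ring.
  replace (y + (s + s)) with (y + s + s) by ring.
  ring.
Qed.

Lemma Bint_is_RIntB f x y s : 0 <= s -> BdP (ctnC f) x y s ->
  @is_RInt C_R_NormedModule (bd f x y s) 0 s (Bint f x y s).
Proof.
  intros Hs HS.
  assert (I1 := Sd_is_RInt f x y 1 0 s Hs Rabs1 Rabs0 ltac:(bdp HS)).
  assert (I2 := Sd_is_RInt f (x + s) y 0 1 s Hs Rabs0 Rabs1 ltac:(bdp HS)).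
  assert (I3 := Sd_is_RInt f x (y + s) 1 0 s Hs Rabs1 Rabs0 ltac:(bdp HS)).
  assert (I4 := Sd_is_RInt f x y 0 1 s Hs Rabs0 Rabs1 ltac:(bdp HS)).
  apply (is_RInt_Cmult _ _ _ _ Ci) in I2. apply (is_RInt_Cmult _ _ _ _ Ci) in I4.
  pose proof (is_RInt_minus _ _ _ _ _ _ (is_RInt_minus _ _ _ _ _ _ (is_RInt_plus _ _ _ _ _ _ I1 I2) I3) I4) as I.
  unfold Bint. eapply is_RInt_ext; [|exact I].
  intros t _. unfold bd. rewrite !Rmult_1_r, !Rmult_0_r, !Rplus_0_r. reflexivity.
Qed.

Lemma bd_boundB f x y s t M : 0 <= t <= s ->
  BdP (fun z => Cmod (f z) <= M) x y s ->
  Cmod (bd f x y s t) <= 4 * M.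
Proof.
  intros Ht H. unfold bd.
  destruct (H t Ht) as [A1 [A2 [A3 A4]]].
  unfold Cminus.
  eapply Rle_trans; [apply Cmod_triangle|]. rewrite Cmod_opp, Cmod_Ci_mult.
  eapply Rle_trans; [apply Rplus_le_compat_r; apply Cmod_triangle|]. rewrite Cmod_opp.
  eapply Rle_trans; [apply Rplus_le_compat_r; apply Rplus_le_compat_r; apply Cmod_triangle|]. rewrite Cmod_Ci_mult.
  lra.
Qed.

Lemma Bint_boundB f x y s M : 0 <= s -> BdP (ctnC f) x y s ->
  BdP (fun z => Cmod (f z) <= M) x y s ->
  Cmod (Bint f x y s) <= s * (4 * M).
Proof.
  intros Hs HS H. pose proof (Bint_is_RIntB f x y s Hs HS) as I.
  rewrite <- normC. replace s with (s - 0) at 2 by ring.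
  apply (norm_RInt_le_const (bd f x y s) 0 s _ _ Hs); auto.
  intros t Ht. rewrite normC. apply bd_boundB; auto.
Qed.

Lemma Sd_lin f g x y ex ey s (c : C) : 0 <= s -> Rabs ex <= 1 -> Rabs ey <= 1 ->
  (forall t, 0 <= t <= s -> ctnC f (x + t * ex, y + t * ey)) ->
  (forall t, 0 <= t <= s -> ctnC g (x + t * ex, y + t * ey)) ->
  Sd (fun z => f z - c * g z)%C x y ex ey s = (Sd f x y ex ey s - c * Sd g x y ex ey s)%C.
Proof.
  intros Hs Hx Hy Hf Hg.
  pose proof (Sd_is_RInt f x y ex ey s Hs Hx Hy Hf) as I1.
  pose proof (Sd_is_RInt g x y ex ey s Hs Hx Hy Hg) as I2.
  apply (is_RInt_Cmult _ _ _ _ c) in I2.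
  pose proof (is_RInt_minus _ _ _ _ _ _ I1 I2) as I.
  unfold Sd at 1. apply (@is_RInt_unique C_R_CompleteNormedModule).
  eapply is_RInt_ext; [|exact I]. intros t _. reflexivity.
Qed.

Lemma Bint_lin f g x y s (c : C) : 0 <= s -> BdP (ctnC f) x y s -> BdP (ctnC g) x y s ->
  Bint (fun z => f z - c * g z)%C x y s = (Bint f x y s - c * Bint g x y s)%C.
Proof.
  intros Hs Hf Hg. unfold Bint.
  rewrite !Sd_lin; auto using Rabs0, Rabs1; try bdp Hf; try bdp Hg.
  ring.
Qed.

Lemma hol_lin f g a b z (c : C) : hol_at f a z -> hol_at g b z ->
  hol_at (fun u => f u - c * g u)%C (a - c * b)%C z.
Proof.
  intros Hf Hg eps Heps.
  pose proof (Cmod_ge_0 c) as Hc.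
  destruct (Hf (eps / 2) ltac:(lra)) as [d1 [Hd1 Hd1']].
  destruct (Hg (eps / (2 * (Cmod c + 1))) ltac:(apply Rdiv_lt_0_compat; lra)) as [d2 [Hd2 Hd2']].
  exists (Rmin d1 d2). split; [apply Rmin_pos; auto|]. intros h Hh.
  pose proof (Rmin_l d1 d2). pose proof (Rmin_r d1 d2).
  specialize (Hd1' h ltac:(lra)). specialize (Hd2' h ltac:(lra)).
  replace (f (z + h) - c * g (z + h) - (f z - c * g z) - (a - c * b) * h)%C
    with ((f (z + h) - f z - a * h) - c * (g (z + h) - g z - b * h))%C by ring.
  unfold Cminus at 1. eapply Rle_trans; [apply Cmod_triangle|]. rewrite Cmod_opp, Cmod_mult.
  pose proof (Cmod_ge_0 h).
  assert (Cmod c * Cmod (g (z + h) - g z - b * h)%C <= eps / 2 * Cmod h).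
  { eapply Rle_trans. apply Rmult_le_compat_l; [lra|exact Hd2'].
    replace (Cmod c * (eps / (2 * (Cmod c + 1)) * Cmod h)) with ((Cmod c / (Cmod c + 1)) * (eps / 2 * Cmod h)) by (field; lra).
    assert (Cmod c / (Cmod c + 1) <= 1). { apply Rmult_le_reg_r with (Cmod c + 1); [lra|]. unfold Rdiv. rewrite Rmult_assoc, Rinv_l by lra. lra. }
    assert (0 <= eps / 2 * Cmod h) by nra. nra. }
  lra.
Qed.

Lemma hol_const_sub f a z (c : C) : hol_at f a z -> hol_at (fun u => f u - c)%C a z.
Proof.
  intros Hf eps Heps. destruct (Hf eps Heps) as [d [Hd Hd']]. exists d. split; auto. intros h Hh.
  replace (f (z + h) - c - (f z - c) - a * h)%C with (f (z + h) - f z - a * h)%C by ring. auto.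
Qed.

Lemma hol_bound f a z : hol_at f a z -> exists d, 0 < d /\ forall h, Cmod h < d -> Cmod (f (z + h) - f z)%C <= (Cmod a + 1) * Cmod h.
Proof.
  intros Hf. destruct (Hf 1 Rlt_0_1) as [d [Hd Hd']]. exists d. split; auto. intros h Hh.
  specialize (Hd' h Hh).
  replace (f (z + h) - f z)%C with ((f (z + h) - f z - a * h) + a * h)%C by ring.
  eapply Rle_trans; [apply Cmod_triangle|]. rewrite Cmod_mult. lra.
Qed.

Lemma hol_mult f g a b z : hol_at f a z -> hol_at g b z ->
  hol_at (fun u => f u * g u)%C (a * g z + f z * b)%C z.
Proof.
  intros Hf Hg eps Heps.
  set (A := Cmod (f z)). set (B := Cmod (g z)). set (P := Cmod a). set (Q := Cmod b).
  assert (0 <= A) by apply Cmod_ge_0. assert (0 <= B) by apply Cmod_ge_0.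
  assert (0 <= P) by apply Cmod_ge_0. assert (0 <= Q) by apply Cmod_ge_0.
  destruct (hol_bound g b z Hg) as [d0 [Hd0 Hd0']].
  destruct (Hf (eps / (3 * (B + Q + 2))) ltac:(apply Rdiv_lt_0_compat; lra)) as [d1 [Hd1 Hd1']].
  destruct (Hg (eps / (3 * (A + 1))) ltac:(apply Rdiv_lt_0_compat; lra)) as [d2 [Hd2 Hd2']].
  set (d3 := Rmin 1 (eps / (3 * ((P + 1) * (Q + 1))))).
  assert (Hd3 : 0 < d3). { apply Rmin_pos; [lra|]. apply Rdiv_lt_0_compat; [lra|]. nra. }
  exists (Rmin (Rmin d0 d1) (Rmin d2 d3)). split.
  { apply Rmin_pos; apply Rmin_pos; auto. }
  intros h Hh.
  assert (h0 : Cmod h < d0) by (eapply Rlt_le_trans; [exact Hh|]; eapply Rle_trans; apply Rmin_l).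
  assert (h1 : Cmod h < d1) by (eapply Rlt_le_trans; [exact Hh|]; eapply Rle_trans; [apply Rmin_l|apply Rmin_r]).
  assert (h2 : Cmod h < d2) by (eapply Rlt_le_trans; [exact Hh|]; eapply Rle_trans; [apply Rmin_r|apply Rmin_l]).
  assert (h3 : Cmod h < d3) by (eapply Rlt_le_trans; [exact Hh|]; eapply Rle_trans; [apply Rmin_r|apply Rmin_r]).
  assert (h31 : Cmod h <= 1) by (pose proof (Rmin_l 1 (eps / (3 * ((P + 1) * (Q + 1))))); fold d3 in H3; lra).
  assert (h32 : Cmod h <= eps / (3 * ((P + 1) * (Q + 1)))) by (pose proof (Rmin_r 1 (eps / (3 * ((P + 1) * (Q + 1))))); fold d3 in H3; lra).
  specialize (Hd0' h h0). specialize (Hd1' h h1). specialize (Hd2' h h2).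
  set (Ef := (f (z + h) - f z - a * h)%C) in *.
  set (Eg := (g (z + h) - g z - b * h)%C) in *.
  replace (f (z + h) * g (z + h) - f z * g z - (a * g z + f z * b) * h)%C
    with (Ef * g (z + h) + f z * Eg + a * h * (g (z + h) - g z))%C by (unfold Ef, Eg; ring).
  pose proof (Cmod_ge_0 h) as Hh0.
  fold Q in Hd0'.
  assert (Hgz : Cmod (g (z + h)%C) <= B + Q + 1).
  { replace (g (z + h)%C) with (g z + (g (z + h) - g z))%C by ring.
    eapply Rle_trans; [apply Cmod_triangle|]. fold B. nra. }
  assert (T1 : Cmod (Ef * g (z + h))%C <= eps / 3 * Cmod h).
  { rewrite Cmod_mult. pose proof (Cmod_ge_0 Ef). pose proof (Cmod_ge_0 (g (z + h)%C)).
    eapply Rle_trans. apply Rmult_le_compat; eauto.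
    replace (eps / (3 * (B + Q + 2)) * Cmod h * (B + Q + 1)) with ((B + Q + 1) / (B + Q + 2) * (eps / 3 * Cmod h)) by (field; lra).
    assert ((B + Q + 1) / (B + Q + 2) <= 1). { apply Rmult_le_reg_r with (B + Q + 2); [lra|]. unfold Rdiv. rewrite Rmult_assoc, Rinv_l by lra. lra. }
    assert (0 <= eps / 3 * Cmod h) by nra. nra. }
  assert (T2 : Cmod (f z * Eg)%C <= eps / 3 * Cmod h).
  { rewrite Cmod_mult. fold A. pose proof (Cmod_ge_0 Eg).
    eapply Rle_trans. apply Rmult_le_compat_l; eauto.
    replace (A * (eps / (3 * (A + 1)) * Cmod h)) with (A / (A + 1) * (eps / 3 * Cmod h)) by (field; lra).
    assert (A / (A + 1) <= 1). { apply Rmult_le_reg_r with (A + 1); [lra|]. unfold Rdiv. rewrite Rmult_assoc, Rinv_l by lra. lra. }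
    assert (0 <= eps / 3 * Cmod h) by nra. nra. }
  assert (T3 : Cmod (a * h * (g (z + h) - g z))%C <= eps / 3 * Cmod h).
  { rewrite !Cmod_mult. fold P.
    assert (P * Cmod h * Cmod (g (z + h) - g z)%C <= P * Cmod h * ((Q + 1) * Cmod h)).
    { apply Rmult_le_compat_l; auto. nra. }
    assert (P * (Q + 1) * Cmod h <= eps / 3).
    { eapply Rle_trans. apply Rmult_le_compat_l; [nra|exact h32].
      replace (P * (Q + 1) * (eps / (3 * ((P + 1) * (Q + 1))))) with (P / (P + 1) * (eps / 3)) by (field; lra).
      assert (P / (P + 1) <= 1). { apply Rmult_le_reg_r with (P + 1); [lra|]. unfold Rdiv. rewrite Rmult_assoc, Rinv_l by lra. lra. }
      nra. }
    nra. }
  eapply Rle_trans; [apply Cmod_triangle|].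
  eapply Rle_trans; [apply Rplus_le_compat_r; apply Cmod_triangle|]. lra.
Qed.

Lemma hol_inv w z : z <> w -> hol_at (fun u => / (u - w))%C (- / ((z - w) * (z - w)))%C z.
Proof.
  intros Hz eps Heps.
  assert (Hu : (z - w)%C <> 0%C) by (intro E; apply Hz; replace z with ((z - w) + w)%C by ring; rewrite E; ring).
  set (u := (z - w)%C) in *. pose proof (proj1 (Cmod_gt_0 u) Hu) as Hu'.
  exists (Rmin (Cmod u / 2) (eps * (Cmod u * Cmod u * Cmod u) / 2)). split.
  { apply Rmin_pos; [lra|]. apply Rdiv_lt_0_compat; [|lra]. repeat apply Rmult_lt_0_compat; auto. }
  intros h Hh. pose proof (Rmin_l (Cmod u / 2) (eps * (Cmod u * Cmod u * Cmod u) / 2)).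
  pose proof (Rmin_r (Cmod u / 2) (eps * (Cmod u * Cmod u * Cmod u) / 2)).
  assert (Huh : Cmod u / 2 <= Cmod (u + h)%C).
  { assert (Cmod u <= Cmod (u + h)%C + Cmod h).
    { replace u with ((u + h) + - h)%C at 1 by ring. eapply Rle_trans; [apply Cmod_triangle|]. rewrite Cmod_opp. lra. }
    lra. }
  assert (Huh0 : (u + h)%C <> 0%C). { intro E. rewrite E, Cmod_0 in Huh. lra. }
  replace (z + h - w)%C with (u + h)%C by (unfold u; ring).
  replace (/ (u + h) - / u - - / (u * u) * h)%C with (h * h / (u * u * (u + h)))%C by (field; auto).
  rewrite Cmod_div by (repeat apply Cmult_neq_0; auto).
  rewrite !Cmod_mult. pose proof (Cmod_ge_0 h).
  apply Rmult_le_reg_r with (Cmod u * Cmod u * Cmod (u + h)%C).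
  { repeat apply Rmult_lt_0_compat; lra. }
  unfold Rdiv. rewrite Rmult_assoc, Rinv_l by (apply Rgt_not_eq; repeat apply Rmult_lt_0_compat; lra).
  rewrite Rmult_1_r.
  assert (Cmod h <= eps * (Cmod u * Cmod u * Cmod u) / 2) by lra.
  assert (eps * Cmod h * (Cmod u * Cmod u * (Cmod u / 2)) <= eps * Cmod h * (Cmod u * Cmod u * Cmod (u + h)%C)).
  { apply Rmult_le_compat_l; [nra|]. apply Rmult_le_compat_l; [nra|lra]. }
  nra.
Qed.

Lemma Cminus_pair (a b c d : R) : ((a, b) - (c, d))%C = ((a - c)%R, (b - d)%R).
Proof. unfold Cminus, Cplus, Copp; simpl; f_equal; ring. Qed.

Lemma Cinv_pair (p q : R) : (/ (p, q))%C = ((p / (p * p + q * q))%R, (- q / (p * p + q * q))%R).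
Proof. unfold Cinv; simpl. rewrite !Rmult_1_r. reflexivity. Qed.

Lemma frac_lb p a : 0 < a -> p * p <= a * a -> 1 / (2 * a) <= a / (p * p + a * a).
Proof.
  intros Ha Hp. replace (1 / (2 * a)) with (a * / (2 * a * a)) by (field; lra).
  unfold Rdiv. apply Rmult_le_compat_l; [lra|]. apply Rinv_le_contravar; nra.
Qed.

Lemma RInt_lb (g : R -> R) s l m : 0 <= s -> is_RInt g 0 s l -> (forall t, 0 <= t <= s -> m <= g t) -> m * s <= l.
Proof.
  intros Hs Hi Hm. pose proof (@is_RInt_const R_NormedModule 0 s m) as Hc.
  pose proof (is_RInt_le (fun _ => m) g 0 s _ _ Hs Hc Hi ltac:(intros; apply Hm; lra)) as H.
  unfold scal in H; simpl in H; unfold mult in H; simpl in H. lra.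
Qed.

Lemma Sd_Im f x y ex ey s : 0 <= s -> Rabs ex <= 1 -> Rabs ey <= 1 ->
  (forall t, 0 <= t <= s -> ctnC f (x + t * ex, y + t * ey)) ->
  is_RInt (fun t => Im (f (x + t * ex, y + t * ey))) 0 s (Im (Sd f x y ex ey s)) /\
  is_RInt (fun t => Re (f (x + t * ex, y + t * ey))) 0 s (Re (Sd f x y ex ey s)).
Proof.
  intros Hs Hx Hy H. pose proof (Sd_is_RInt f x y ex ey s Hs Hx Hy H) as I.
  split.
  - exact (@is_RInt_fct_extend_snd R_NormedModule R_NormedModule _ _ _ _ I).
  - exact (@is_RInt_fct_extend_fst R_NormedModule R_NormedModule _ _ _ _ I).
Qed.

Lemma pow3_ge n : INR n <= 3 ^ n.
Proof. induction n as [|n IH]; [simpl; lra|]. rewrite S_INR. simpl. pose proof (pow_R1_Rle 3 n ltac:(lra)). lra. Qed.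

Section Cauchy.
Variables (g g' : C -> C) (w1 w2 a K : R).
Hypothesis Ha : 0 < a.
Hypothesis Hg : forall u v, w1 - a <= u <= w1 + a -> w2 - a <= v <= w2 + a -> hol_at g (g' (u, v)) (u, v).
Hypothesis HK : forall u v, w1 - a <= u <= w1 + a -> w2 - a <= v <= w2 + a -> Cmod (g (u, v)) <= K.

Definition k1 (z : C) : C := Cinv (Cminus z (w1, w2)).
Definition Fc (z : C) : C := Cmult (Cmult (Cminus (g z) (g (w1, w2))) (k1 z)) (k1 z).
Definition psi (z : C) : C := Cminus (Fc z) (Cmult (g' (w1, w2)) (k1 z)).

Lemma pt_ne u v : (u <> w1 \/ v <> w2) -> (u, v) <> (w1, w2).
Proof. intros [H|H] E; injection E; intros; auto. Qed.

Lemma all_hol u v : w1 - a <= u <= w1 + a -> w2 - a <= v <= w2 + a -> (u, v) <> (w1, w2) ->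
  (exists d, hol_at psi d (u, v)) /\ (exists d, hol_at Fc d (u, v)) /\ (exists d, hol_at k1 d (u, v)).
Proof.
  intros Hu Hv Hne.
  pose proof (hol_inv (w1, w2) (u, v) Hne) as Hk.
  pose proof (hol_const_sub g _ (u, v) (g (w1, w2)) (Hg u v Hu Hv)) as H1.
  pose proof (hol_mult _ _ _ _ _ H1 Hk) as H2.
  pose proof (hol_mult _ _ _ _ _ H2 Hk) as H3.
  pose proof (hol_lin _ _ _ _ _ (g' (w1, w2)) H3 Hk) as H4.
  split; [eexists; exact H4|]. split; [eexists; exact H3|]. eexists; exact Hk.
Qed.

Definition hn (n : nat) := a / 3 ^ n.
Lemma hn_pos n : 0 < hn n.
Proof. unfold hn. apply Rdiv_lt_0_compat; auto. apply pow_lt; lra. Qed.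
Lemma hn_S n : hn n = 3 * hn (S n).
Proof. unfold hn. simpl. field. apply pow_nonzero. lra. Qed.
Lemma hn_le n : hn n <= a.
Proof. unfold hn. pose proof (pow_R1_Rle 3 n ltac:(lra)). unfold Rdiv.
  rewrite <- (Rmult_1_r a) at 2. apply Rmult_le_compat_l; [lra|]. rewrite <- Rinv_1. apply Rinv_le_contravar; lra. Qed.

Lemma sub_zero X Y s : 0 < s -> w1 - a <= X -> X + s <= w1 + a -> w2 - a <= Y -> Y + s <= w2 + a ->
  (X + s < w1 \/ w1 < X \/ Y + s < w2 \/ w2 < Y) -> Bint psi X Y s = 0%C.
Proof.
  intros Hs H1 H2 H3 H4 Hd. apply goursat; auto. intros u v Hu Hv.
  apply all_hol; try lra. apply pt_ne. destruct Hd as [?|[?|[?|?]]]; [left|left|right|right]; lra.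
Qed.

Lemma bd_ctn_level P n : (forall u v, w1 - a <= u <= w1 + a -> w2 - a <= v <= w2 + a -> (u, v) <> (w1, w2) -> P (u, v)) ->
  BdP P (w1 - hn n) (w2 - hn n) (2 * hn n).
Proof.
  intros HP t Ht. pose proof (hn_pos n). pose proof (hn_le n).
  repeat split; apply HP; try lra; apply pt_ne; lra.
Qed.

Lemma iter n : Bint psi (w1 - a) (w2 - a) (2 * a) = Bint psi (w1 - hn n) (w2 - hn n) (2 * hn n).
Proof.
  induction n as [|n IH].
  - unfold hn. simpl. rewrite Rdiv_1_r. reflexivity.
  - rewrite IH. pose proof (hn_S n) as E. pose proof (hn_pos (S n)). pose proof (hn_le n).
    set (s := 2 * hn (S n)).
    replace (2 * hn n) with (s + s + s) by (unfold s; lra).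
    rewrite Bint_split3B.
    2:{ unfold s; lra. }
    2:{ replace (s + s + s) with (2 * hn n) by (unfold s; lra).
        apply bd_ctn_level. intros u v Hu Hv Hne. destruct (all_hol u v Hu Hv Hne) as [[d Hd] _]. eapply hol_ctn; eauto. }
    rewrite (sub_zero (w1 - hn n) (w2 - hn n) s) by (unfold s; try lra; first [left; lra | right; left; lra | right; right; left; lra | right; right; right; lra]).
    rewrite (sub_zero (w1 - hn n + s) (w2 - hn n) s) by (unfold s; try lra; first [left; lra | right; left; lra | right; right; left; lra | right; right; right; lra]).
    rewrite (sub_zero (w1 - hn n + s + s) (w2 - hn n) s) by (unfold s; try lra; first [left; lra | right; left; lra | right; right; left; lra | right; right; right; lra]).
    rewrite (sub_zero (w1 - hn n) (w2 - hn n + s) s) by (unfold s; try lra; first [left; lra | right; left; lra | right; right; left; lra | right; right; right; lra]).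
    rewrite (sub_zero (w1 - hn n + s + s) (w2 - hn n + s) s) by (unfold s; try lra; first [left; lra | right; left; lra | right; right; left; lra | right; right; right; lra]).
    rewrite (sub_zero (w1 - hn n) (w2 - hn n + s + s) s) by (unfold s; try lra; first [left; lra | right; left; lra | right; right; left; lra | right; right; right; lra]).
    rewrite (sub_zero (w1 - hn n + s) (w2 - hn n + s + s) s) by (unfold s; try lra; first [left; lra | right; left; lra | right; right; left; lra | right; right; right; lra]).
    rewrite (sub_zero (w1 - hn n + s + s) (w2 - hn n + s + s) s) by (unfold s; try lra; first [left; lra | right; left; lra | right; right; left; lra | right; right; right; lra]).
    replace (w1 - hn n + s) with (w1 - hn (S n)) by (unfold s; lra).
    replace (w2 - hn n + s) with (w2 - hn (S n)) by (unfold s; lra).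
    ring.
Qed.

Lemma psi_formula z : z <> (w1, w2) ->
  psi z = ((g z - g (w1, w2) - g' (w1, w2) * (z - (w1, w2))) / ((z - (w1, w2)) * (z - (w1, w2))))%C.
Proof.
  intros Hz. assert (Hn : (z - (w1, w2))%C <> 0%C).
  { intro E. apply Hz. replace z with ((z - (w1, w2)) + (w1, w2))%C by ring. rewrite E. apply Cplus_0_l. }
  unfold psi, Fc, k1. field. auto.
Qed.

Lemma pair_add_sub (u v w1' w2' : R) : ((w1', w2') + ((u, v) - (w1', w2')))%C = (u, v).
Proof. unfold Cplus, Cminus, Copp; simpl; f_equal; ring. Qed.

Lemma ptb eps delta h u v : 0 < eps -> 0 < h -> 2 * h < delta -> h <= a ->
  (forall k, Cmod k < delta -> Cmod (g ((w1, w2) + k) - g (w1, w2) - g' (w1, w2) * k)%C <= eps * Cmod k) ->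
  w1 - h <= u <= w1 + h -> w2 - h <= v <= w2 + h ->
  (u = w1 - h \/ u = w1 + h \/ v = w2 - h \/ v = w2 + h) -> Cmod (psi (u, v)) <= eps / h.
Proof.
  intros He Hh Hd Ha' Hhol Hu Hv Hb.
  set (xi := ((u, v) - (w1, w2))%C).
  assert (Hxi1 : h <= Cmod xi).
  { pose proof (re_le_Cmod xi). pose proof (im_le_Cmod xi). unfold xi in *. rewrite Cminus_pair in *. simpl in *.
    destruct Hb as [E|[E|[E|E]]]; rewrite E in *.
    - replace (w1 - h - w1) with (- h) in * by ring. rewrite Rabs_Ropp, Rabs_pos_eq in * by lra. lra.
    - replace (w1 + h - w1) with h in * by ring. rewrite Rabs_pos_eq in * by lra. lra.
    - replace (w2 - h - w2) with (- h) in * by ring. rewrite Rabs_Ropp, Rabs_pos_eq in * by lra. lra.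
    - replace (w2 + h - w2) with h in * by ring. rewrite Rabs_pos_eq in * by lra. lra. }
  assert (Hxi2 : Cmod xi < delta).
  { unfold xi. eapply Rle_lt_trans; [apply Cmod_sub_pair_le|].
    assert (Rabs (u - w1) <= h) by (apply Rabs_le; lra). assert (Rabs (v - w2) <= h) by (apply Rabs_le; lra). lra. }
  assert (Hne : (u, v) <> (w1, w2)).
  { intro E. injection E. intros E2 E1. unfold xi in Hxi1. rewrite Cminus_pair, E1, E2, !Rminus_diag in Hxi1.
    assert (Cmod (0%R, 0%R) = 0) by apply Cmod_0. lra. }
  rewrite psi_formula by auto. fold xi.
  specialize (Hhol xi Hxi2). unfold xi in Hhol at 1. rewrite pair_add_sub in Hhol. fold xi in Hhol.
  assert (Hx0 : xi <> 0%C). { intro E. rewrite E, Cmod_0 in Hxi1. lra. }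
  rewrite Cmod_div by (apply Cmult_neq_0; auto). rewrite Cmod_mult.
  apply Rmult_le_reg_r with (Cmod xi * Cmod xi); [nra|].
  unfold Rdiv. rewrite Rmult_assoc, Rinv_l by nra. rewrite Rmult_1_r.
  assert (eps * Cmod xi <= eps * / h * (Cmod xi * Cmod xi)).
  { replace (eps * / h * (Cmod xi * Cmod xi)) with (eps * Cmod xi * (Cmod xi / h)) by (field; lra).
    assert (1 <= Cmod xi / h). { apply Rmult_le_reg_r with h; auto. unfold Rdiv. rewrite Rmult_assoc, Rinv_l by lra. lra. }
    assert (0 <= eps * Cmod xi) by nra. nra. }
  lra.
Qed.

Lemma lvl_bound eps : 0 < eps -> exists n, Cmod (Bint psi (w1 - hn n) (w2 - hn n) (2 * hn n)) <= 8 * eps.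
Proof.
  intros He. destruct (Hg w1 w2 ltac:(lra) ltac:(lra) eps He) as [delta [Hd Hd']].
  destruct (archimed_cor1 (delta / (2 * a))) as [N [HN1 HN2]]; [apply Rdiv_lt_0_compat; lra|].
  exists N. pose proof (hn_pos N). pose proof (hn_le N).
  assert (HsN : 2 * hn N < delta).
  { unfold hn. pose proof (pow3_ge N). assert (0 < INR N) by (apply lt_0_INR; lia).
    assert (a / 3 ^ N <= a / INR N). { apply Rmult_le_compat_l; [lra|]. apply Rinv_le_contravar; lra. }
    assert (a / INR N < delta / 2).
    { apply (Rmult_lt_compat_l (2 * a)) in HN1; [|lra].
      replace (2 * a * (delta / (2 * a))) with delta in HN1 by (field; lra).
      unfold Rdiv. replace (a * / INR N) with (2 * a * / INR N / 2) by (field; lra). lra. }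
    lra. }
  eapply Rle_trans.
  - apply (Bint_boundB psi _ _ _ (eps / hn N)); [lra| |].
    + apply bd_ctn_level. intros u v Hu Hv Hne. destruct (all_hol u v Hu Hv Hne) as [[d Hd0] _]. eapply hol_ctn; eauto.
    + intros t Ht. repeat split; (eapply ptb; [exact He|exact H|exact HsN|exact H0|exact Hd'|lra|lra|lra]).
  - right. field. lra.
Qed.

Lemma Bint_psi_zero : Bint psi (w1 - a) (w2 - a) (2 * a) = 0%C.
Proof.
  apply Cmod_eq_0. pose proof (Cmod_ge_0 (Bint psi (w1 - a) (w2 - a) (2 * a))).
  destruct (Req_dec (Cmod (Bint psi (w1 - a) (w2 - a) (2 * a))) 0) as [Z|Z]; auto.
  destruct (lvl_bound (Cmod (Bint psi (w1 - a) (w2 - a) (2 * a)) / 16) ltac:(lra)) as [n Hn].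
  rewrite <- iter in Hn. lra.
Qed.

Lemma xi_lb h u v : 0 < h -> w1 - h <= u <= w1 + h -> w2 - h <= v <= w2 + h ->
  (u = w1 - h \/ u = w1 + h \/ v = w2 - h \/ v = w2 + h) -> h <= Cmod ((u, v) - (w1, w2))%C.
Proof.
  intros Hh Hu Hv Hb.
  pose proof (re_le_Cmod ((u, v) - (w1, w2))%C). pose proof (im_le_Cmod ((u, v) - (w1, w2))%C).
  rewrite Cminus_pair in *. simpl in *.
  destruct Hb as [E|[E|[E|E]]]; rewrite E in *.
  - replace (w1 - h - w1) with (- h) in * by ring. rewrite Rabs_Ropp, Rabs_pos_eq in * by lra. lra.
  - replace (w1 + h - w1) with h in * by ring. rewrite Rabs_pos_eq in * by lra. lra.
  - replace (w2 - h - w2) with (- h) in * by ring. rewrite Rabs_Ropp, Rabs_pos_eq in * by lra. lra.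
  - replace (w2 + h - w2) with h in * by ring. rewrite Rabs_pos_eq in * by lra. lra.
Qed.

Lemma Fc_bd u v : w1 - a <= u <= w1 + a -> w2 - a <= v <= w2 + a ->
  (u = w1 - a \/ u = w1 + a \/ v = w2 - a \/ v = w2 + a) -> Cmod (Fc (u, v)) <= 2 * K / (a * a).
Proof.
  intros Hu Hv Hb. pose proof (xi_lb a u v Ha Hu Hv Hb) as Hx.
  assert (Hx0 : ((u, v) - (w1, w2))%C <> 0%C). { intro E. rewrite E, Cmod_0 in Hx. lra. }
  unfold Fc, k1. rewrite !Cmod_mult. rewrite Cmod_inv by auto.
  assert (Hg2 : Cmod (g (u, v) - g (w1, w2))%C <= 2 * K).
  { unfold Cminus. eapply Rle_trans; [apply Cmod_triangle|]. rewrite Cmod_opp.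
    pose proof (HK u v Hu Hv). pose proof (HK w1 w2 ltac:(lra) ltac:(lra)). lra. }
  set (m := Cmod ((u, v) - (w1, w2))%C) in *.
  assert (0 < / m <= / a). { split. apply Rinv_0_lt_compat; lra. apply Rinv_le_contravar; lra. }
  pose proof (Cmod_ge_0 (g (u, v) - g (w1, w2))%C).
  replace (2 * K / (a * a)) with (2 * K * / a * / a) by (field; lra).
  assert (Cmod (g (u, v) - g (w1, w2))%C * / m <= 2 * K * / a) by (apply Rmult_le_compat; lra).
  apply Rmult_le_compat; try lra. apply Rmult_le_pos; lra.
Qed.

Lemma bd_big P : (forall u v, w1 - a <= u <= w1 + a -> w2 - a <= v <= w2 + a -> (u, v) <> (w1, w2) -> P (u, v)) ->
  BdP P (w1 - a) (w2 - a) (2 * a).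
Proof.
  intros HP t Ht. repeat split; apply HP; try lra; apply pt_ne; lra.
Qed.

Lemma k1_parts u v : k1 (u, v) = (((u - w1) / ((u - w1) * (u - w1) + (v - w2) * (v - w2)))%R,
   (- (v - w2) / ((u - w1) * (u - w1) + (v - w2) * (v - w2)))%R).
Proof. unfold k1. rewrite Cminus_pair, Cinv_pair. reflexivity. Qed.

Lemma Im_comb (a1 a2 a3 a4 : C) : Im (a1 + Ci * a2 - a3 - Ci * a4)%C = Im a1 + Re a2 - Im a3 - Re a4.
Proof. destruct a1, a2, a3, a4. unfold Cminus, Cplus, Cmult, Copp, Ci; simpl. ring. Qed.

Lemma RInt_ub (h : R -> R) s l m : 0 <= s -> is_RInt h 0 s l -> (forall t, 0 <= t <= s -> h t <= m) -> l <= m * s.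
Proof.
  intros Hs Hi Hm. pose proof (@is_RInt_const R_NormedModule 0 s m) as Hc.
  pose proof (is_RInt_le h (fun _ => m) 0 s _ _ Hs Hi Hc ltac:(intros; apply Hm; lra)) as H.
  unfold scal in H; simpl in H; unfold mult in H; simpl in H. lra.
Qed.

Theorem cauchy_est : Cmod (g' (w1, w2)) <= 4 * K / a.
Proof.
  assert (Cf : BdP (ctnC Fc) (w1 - a) (w2 - a) (2 * a)).
  { apply bd_big. intros u v Hu Hv Hne. destruct (all_hol u v Hu Hv Hne) as [_ [[d Hd] _]]. eapply hol_ctn; eauto. }
  assert (Ck : BdP (ctnC k1) (w1 - a) (w2 - a) (2 * a)).
  { apply bd_big. intros u v Hu Hv Hne. destruct (all_hol u v Hu Hv Hne) as [_ [_ [d Hd]]]. eapply hol_ctn; eauto. }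
  pose proof Bint_psi_zero as Z.
  pose proof (Bint_lin Fc k1 (w1 - a) (w2 - a) (2 * a) (g' (w1, w2)) ltac:(lra) Cf Ck) as L.
  change (Bint (fun z => (Fc z - g' (w1, w2) * k1 z)%C) (w1 - a) (w2 - a) (2 * a)) with (Bint psi (w1 - a) (w2 - a) (2 * a)) in L.
  rewrite Z in L.
  assert (EF : Bint Fc (w1 - a) (w2 - a) (2 * a) = (g' (w1, w2) * Bint k1 (w1 - a) (w2 - a) (2 * a))%C).
  { apply (f_equal (fun q => q + g' (w1, w2) * Bint k1 (w1 - a) (w2 - a) (2 * a))%C) in L.
    rewrite Cplus_0_l in L. rewrite L. ring. }
  assert (BF : Cmod (Bint Fc (w1 - a) (w2 - a) (2 * a)) <= 2 * a * (4 * (2 * K / (a * a)))).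
  { apply Bint_boundB; [lra|exact Cf|]. intros t Ht. repeat split; apply Fc_bd; lra. }
  assert (BK : 4 <= Cmod (Bint k1 (w1 - a) (w2 - a) (2 * a))).
  { assert (4 <= Im (Bint k1 (w1 - a) (w2 - a) (2 * a))).
    { unfold Bint. rewrite Im_comb.
      destruct (Sd_Im k1 (w1 - a) (w2 - a) 1 0 (2 * a) ltac:(lra) Rabs1 Rabs0 ltac:(bdp Ck)) as [I1 _].
      destruct (Sd_Im k1 (w1 - a + 2 * a) (w2 - a) 0 1 (2 * a) ltac:(lra) Rabs0 Rabs1 ltac:(bdp Ck)) as [_ I2].
      destruct (Sd_Im k1 (w1 - a) (w2 - a + 2 * a) 1 0 (2 * a) ltac:(lra) Rabs1 Rabs0 ltac:(bdp Ck)) as [I3 _].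
      destruct (Sd_Im k1 (w1 - a) (w2 - a) 0 1 (2 * a) ltac:(lra) Rabs0 Rabs1 ltac:(bdp Ck)) as [_ I4].
      apply RInt_lb with (m := 1 / (2 * a)) in I1; [|lra|].
      2:{ intros t Ht. rewrite Rmult_1_r, Rmult_0_r, Rplus_0_r, k1_parts. simpl.
          replace (w2 - a - w2) with (- a) by ring. replace (w1 - a + t - w1) with (t - a) by ring.
          replace (- - a) with a by ring. replace (- a * - a) with (a * a) by ring. apply frac_lb; nra. }
      apply RInt_lb with (m := 1 / (2 * a)) in I2; [|lra|].
      2:{ intros t Ht. rewrite Rmult_1_r, Rmult_0_r, Rplus_0_r, k1_parts. simpl.
          replace (w1 - a + 2 * a - w1) with a by ring. replace (w2 - a + t - w2) with (t - a) by ring.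
          replace (a * a + (t - a) * (t - a)) with ((t - a) * (t - a) + a * a) by ring. apply frac_lb; nra. }
      apply RInt_ub with (m := - (1 / (2 * a))) in I3; [|lra|].
      2:{ intros t Ht. rewrite Rmult_1_r, Rmult_0_r, Rplus_0_r, k1_parts. simpl.
          replace (w2 - a + 2 * a - w2) with a by ring. replace (w1 - a + t - w1) with (t - a) by ring.
          unfold Rdiv. rewrite Ropp_mult_distr_l_reverse. apply Ropp_le_contravar. apply frac_lb; nra. }
      apply RInt_ub with (m := - (1 / (2 * a))) in I4; [|lra|].
      2:{ intros t Ht. rewrite Rmult_1_r, Rmult_0_r, Rplus_0_r, k1_parts. simpl.
          replace (w1 - a - w1) with (- a) by ring. replace (w2 - a + t - w2) with (t - a) by ring.
          replace (- a * - a + (t - a) * (t - a)) with ((t - a) * (t - a) + a * a) by ring.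
          unfold Rdiv. rewrite Ropp_mult_distr_l_reverse. apply Ropp_le_contravar. apply frac_lb; nra. }
      replace (1 / (2 * a) * (2 * a)) with 1 in * by (field; lra).
      replace (- (1 / (2 * a)) * (2 * a)) with (-1) in * by (field; lra).
      lra. }
    pose proof (im_le_Cmod (Bint k1 (w1 - a) (w2 - a) (2 * a))). pose proof (Rle_abs (Im (Bint k1 (w1 - a) (w2 - a) (2 * a)))). lra. }
  rewrite EF, Cmod_mult in BF.
  replace (2 * a * (4 * (2 * K / (a * a)))) with (16 * (K / a)) in BF by (field; lra).
  replace (4 * K / a) with (4 * (K / a)) by (field; lra).
  pose proof (Cmod_ge_0 (g' (w1, w2))). nra.
Qed.
End Cauchy.


Definition clamp (lo hi v : R) : R := Rmax lo (Rmin hi v).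

Lemma clamp_prop lo hi r v : lo <= hi -> 0 <= r -> lo - r <= v <= hi + r ->
  lo <= clamp lo hi v <= hi /\ Rabs (v - clamp lo hi v) <= r.
Proof.
  intros H1 H2 H3. unfold clamp, Rmax, Rmin.
  destruct (Rle_dec hi v); destruct (Rle_dec lo _); (split; [lra| apply Rabs_le; lra]).
Qed.

Lemma Cmod_le_re_im (z : C) : Cmod z <= Rabs (Re z) + Rabs (Im z).
Proof. destruct z as [p q]. apply Cmod_pair_le. Qed.

Lemma tri_bound (d g A B C D : R) :
  Rabs A <= d / 2 -> Rabs C <= d / 2 -> Rabs B < g -> Rabs D < g -> d <= g -> 0 < g ->
  Rabs (A + B) + Rabs (C + D) < 4 * g.
Proof. intros. pose proof (Rabs_triang A B). pose proof (Rabs_triang C D). lra. Qed.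

Section Compact.
Variables (Q : C -> C -> Prop) (Phi : C -> C -> R) (x0 x1 y0 y1 : R).
Hypothesis Hx : x0 <= x1.
Hypothesis Hy : y0 <= y1.
Hypothesis Hloc : forall z0 z1, x0 <= Re z0 <= x1 -> y0 <= Im z0 <= y1 -> x0 <= Re z1 <= x1 -> y0 <= Im z1 <= y1 ->
  exists r, 0 < r /\ exists M, forall w0 w1, Cmod (w0 - z0)%C < r -> Cmod (w1 - z1)%C < r -> Q w0 w1 /\ Phi w0 w1 <= M.

Let lo : Compactness.Tn 4 R := (x0, (y0, (x0, (y0, tt)))).
Let hi : Compactness.Tn 4 R := (x1, (y1, (x1, (y1, tt)))).
Definition z0of (t : Compactness.Tn 4 R) : C := (fst t, fst (snd t)).
Definition z1of (t : Compactness.Tn 4 R) : C := (fst (snd (snd t)), fst (snd (snd (snd t)))).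

Let Good (t : Compactness.Tn 4 R) (d : posreal) : Prop := bounded_n 4 lo hi t ->
  forall w0 w1, Cmod (w0 - z0of t)%C < 4 * d -> Cmod (w1 - z1of t)%C < 4 * d -> Q w0 w1 /\ Phi w0 w1 <= / d.

Lemma good_ex t : exists d : posreal, Good t d.
Proof.
  destruct (classic (bounded_n 4 lo hi t)) as [Hb|Hb].
  - destruct t as [a [b [c [e []]]]]. simpl in Hb.
    destruct Hb as [Ha [Hb' [Hc [He _]]]].
    destruct (Hloc (a, b) (c, e) Ha Hb' Hc He) as [r [Hr [M HM]]].
    assert (Hd : 0 < Rmin (r / 4) (/ (Rabs M + 1))).
    { apply Rmin_pos; [lra|]. apply Rinv_0_lt_compat. pose proof (Rabs_pos M); lra. }
    exists (mkposreal _ Hd). intros _ w0 w1 H0 H1. simpl in H0, H1.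
    pose proof (Rmin_l (r / 4) (/ (Rabs M + 1))). pose proof (Rmin_r (r / 4) (/ (Rabs M + 1))).
    destruct (HM w0 w1 ltac:(unfold z0of in H0; simpl in H0; lra) ltac:(unfold z1of in H1; simpl in H1; lra)) as [HQ HP].
    split; auto. simpl.
    assert (/ (/ (Rabs M + 1)) <= / Rmin (r / 4) (/ (Rabs M + 1))) by (apply Rinv_le_contravar; auto).
    rewrite Rinv_inv in H3. pose proof (Rle_abs M). lra.
  - exists (mkposreal 1 Rlt_0_1). intros HH. contradiction.
Qed.

Definition gauge (t : Compactness.Tn 4 R) : posreal := proj1_sig (constructive_indefinite_description _ (good_ex t)).
Lemma gauge_good t : Good t (gauge t).
Proof. unfold gauge. destruct (constructive_indefinite_description _ _). simpl. auto. Qed.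

Theorem compact_bound : exists r, 0 < r /\ exists M, forall w0 w1,
  x0 - r <= Re w0 <= x1 + r -> y0 - r <= Im w0 <= y1 + r -> x0 - r <= Re w1 <= x1 + r -> y0 - r <= Im w1 <= y1 + r ->
  Q w0 w1 /\ Phi w0 w1 <= M.
Proof.
  destruct (compactness_value 4 lo hi gauge) as [d Hd].
  exists (d / 2). split; [destruct d; simpl; lra|]. exists (/ d).
  intros w0 w1 H1 H2 H3 H4.
  pose proof (cond_pos d) as Hd0.
  destruct (clamp_prop x0 x1 (d / 2) (Re w0) Hx ltac:(lra) H1) as [C1 D1].
  destruct (clamp_prop y0 y1 (d / 2) (Im w0) Hy ltac:(lra) H2) as [C2 D2].
  destruct (clamp_prop x0 x1 (d / 2) (Re w1) Hx ltac:(lra) H3) as [C3 D3].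
  destruct (clamp_prop y0 y1 (d / 2) (Im w1) Hy ltac:(lra) H4) as [C4 D4].
  set (c := (clamp x0 x1 (Re w0), (clamp y0 y1 (Im w0), (clamp x0 x1 (Re w1), (clamp y0 y1 (Im w1), tt)))) : Compactness.Tn 4 R).
  assert (Hc : bounded_n 4 lo hi c) by (simpl; tauto).
  specialize (Hd c Hc).
  apply NNPP. intro Hn. apply Hd. intros [t [Ht [Hct Hdt]]].
  apply Hn.
  pose proof (gauge_good t Ht) as G.
  destruct t as [ta [tb [tc [td []]]]].
  simpl in Hct. destruct Hct as [E1 [E2 [E3 [E4 _]]]].
  assert (Hw0 : Cmod (w0 - z0of (ta, (tb, (tc, (td, tt)))))%C < 4 * gauge (ta, (tb, (tc, (td, tt))))).
  { eapply Rle_lt_trans; [apply Cmod_le_re_im|]. unfold z0of. simpl.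
    replace (fst w0 + - ta) with ((Re w0 - clamp x0 x1 (Re w0)) + (clamp x0 x1 (Re w0) - ta)) by (unfold Re; ring).
    replace (snd w0 + - tb) with ((Im w0 - clamp y0 y1 (Im w0)) + (clamp y0 y1 (Im w0) - tb)) by (unfold Im; ring).
    apply tri_bound with d; auto. apply cond_pos. }
  assert (Hw1 : Cmod (w1 - z1of (ta, (tb, (tc, (td, tt)))))%C < 4 * gauge (ta, (tb, (tc, (td, tt))))).
  { eapply Rle_lt_trans; [apply Cmod_le_re_im|]. unfold z1of. simpl.
    replace (fst w1 + - tc) with ((Re w1 - clamp x0 x1 (Re w1)) + (clamp x0 x1 (Re w1) - tc)) by (unfold Re; ring).
    replace (snd w1 + - td) with ((Im w1 - clamp y0 y1 (Im w1)) + (clamp y0 y1 (Im w1) - td)) by (unfold Im; ring).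
    apply tri_bound with d; auto. apply cond_pos. }
  destruct (G w0 w1 Hw0 Hw1) as [GQ GP]. split; auto.
  eapply Rle_trans; [exact GP|]. apply Rinv_le_contravar; auto.
Qed.
End Compact.


Lemma slice0 U f a b z0 z1 : cdiff2_on U f a b -> U z0 z1 -> hol_at (fun u => f u z1) (a z0 z1) z0.
Proof.
  intros Hd Hu eps Heps. destruct (Hd z0 z1 Hu eps Heps) as [d [Hd0 Hd1]].
  exists d. split; auto. intros h Hh.
  specialize (Hd1 h 0%C Hh ltac:(rewrite Cmod_0; lra)).
  rewrite Cplus_0_r, Cmult_0_r, Cmod_0, Rplus_0_r in Hd1.
  replace (f (z0 + h)%C z1 - f z0 z1 - a z0 z1 * h)%C with (f (z0 + h)%C z1 - f z0 z1 - a z0 z1 * h - 0)%C by ring.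
  exact Hd1.
Qed.

Lemma slice1 U f a b z0 z1 : cdiff2_on U f a b -> U z0 z1 -> hol_at (fun u => f z0 u) (b z0 z1) z1.
Proof.
  intros Hd Hu eps Heps. destruct (Hd z0 z1 Hu eps Heps) as [d [Hd0 Hd1]].
  exists d. split; auto. intros h Hh.
  specialize (Hd1 0%C h ltac:(rewrite Cmod_0; lra) Hh).
  rewrite Cplus_0_r, Cmult_0_r, Cmod_0, Rplus_0_l in Hd1.
  replace (f z0 (z1 + h)%C - f z0 z1 - b z0 z1 * h)%C with (f z0 (z1 + h)%C - f z0 z1 - 0 - b z0 z1 * h)%C by ring.
  exact Hd1.
Qed.

Definition locbdd (U : C -> C -> Prop) (Phi : C -> C -> R) (z0 z1 : C) : Prop :=
  exists r, 0 < r /\ exists M, forall w0 w1, Cmod (w0 - z0)%C < r -> Cmod (w1 - z1)%C < r -> U w0 w1 /\ Phi w0 w1 <= M.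

Lemma locbdd_plus U P1 P2 z0 z1 : locbdd U P1 z0 z1 -> locbdd U P2 z0 z1 -> locbdd U (fun w0 w1 => P1 w0 w1 + P2 w0 w1) z0 z1.
Proof.
  intros [r1 [Hr1 [M1 H1]]] [r2 [Hr2 [M2 H2]]]. exists (Rmin r1 r2). split; [apply Rmin_pos; auto|].
  exists (M1 + M2). intros w0 w1 Hw0 Hw1.
  pose proof (Rmin_l r1 r2). pose proof (Rmin_r r1 r2).
  destruct (H1 w0 w1 ltac:(lra) ltac:(lra)). destruct (H2 w0 w1 ltac:(lra) ltac:(lra)). split; auto. lra.
Qed.

Lemma locbdd_cdiff U F A B z0 z1 : openC2 U -> cdiff2_on U F A B -> U z0 z1 -> locbdd U (fun w0 w1 => Cmod (F w0 w1)) z0 z1.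
Proof.
  intros Ho Hd Hu. destruct (Ho z0 z1 Hu) as [e [He HeU]].
  destruct (Hd z0 z1 Hu 1 Rlt_0_1) as [d [Hd0 Hd1]].
  set (r := Rmin e d). assert (Hr : 0 < r) by (apply Rmin_pos; auto).
  exists r. split; auto.
  exists (Cmod (F z0 z1) + (Cmod (A z0 z1) + Cmod (B z0 z1) + 2) * r).
  intros w0 w1 Hw0 Hw1. pose proof (Rmin_l e d). pose proof (Rmin_r e d). fold r in H, H0.
  split; [apply HeU; lra|].
  specialize (Hd1 (w0 - z0)%C (w1 - z1)%C ltac:(lra) ltac:(lra)).
  replace (z0 + (w0 - z0))%C with w0 in Hd1 by ring. replace (z1 + (w1 - z1))%C with w1 in Hd1 by ring.
  set (h0 := (w0 - z0)%C) in *. set (h1 := (w1 - z1)%C) in *.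
  replace (F w0 w1) with (F z0 z1 + A z0 z1 * h0 + B z0 z1 * h1 + (F w0 w1 - F z0 z1 - A z0 z1 * h0 - B z0 z1 * h1))%C by ring.
  pose proof (Cmod_ge_0 h0). pose proof (Cmod_ge_0 h1). pose proof (Cmod_ge_0 (A z0 z1)). pose proof (Cmod_ge_0 (B z0 z1)).
  eapply Rle_trans; [apply Cmod_triangle|].
  eapply Rle_trans; [apply Rplus_le_compat_r; apply Cmod_triangle|].
  eapply Rle_trans; [apply Rplus_le_compat_r; apply Rplus_le_compat_r; apply Cmod_triangle|].
  rewrite !Cmod_mult.
  assert (Cmod (A z0 z1) * Cmod h0 <= Cmod (A z0 z1) * r) by (apply Rmult_le_compat_l; lra).
  assert (Cmod (B z0 z1) * Cmod h1 <= Cmod (B z0 z1) * r) by (apply Rmult_le_compat_l; lra).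
  lra.
Qed.

Lemma Key0 (c : C) : (forall eps, 0 < eps -> exists t, 0 < t /\ Cmod (c * RtoC t)%C <= eps * t) -> c = 0%C.
Proof.
  intros Hc. apply Cmod_eq_0. pose proof (Cmod_ge_0 c).
  destruct (Req_dec (Cmod c) 0) as [Z|Z]; auto.
  destruct (Hc (Cmod c / 2) ltac:(lra)) as [t [Ht Ht']].
  rewrite Cmod_mult, Cmod_R, Rabs_pos_eq in Ht' by lra. nra.
Qed.

Definition cdiff_at (F : C -> C -> C) (a b p0 p1 : C) : Prop :=
  forall eps, 0 < eps -> exists d, 0 < d /\ forall h0 h1, Cmod h0 < d -> Cmod h1 < d ->
     Cmod (F (p0 + h0)%C (p1 + h1)%C - F p0 p1 - a * h0 - b * h1)%C <= eps * (Cmod h0 + Cmod h1).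

Lemma deriv_unique (F1 F2 : C -> C -> C) (a1 b1 a2 b2 p0 p1 q0 q1 : C) :
  cdiff_at F1 a1 b1 p0 p1 -> cdiff_at F2 a2 b2 q0 q1 ->
  (exists rho, 0 < rho /\ forall h0 h1, Cmod h0 < rho -> Cmod h1 < rho -> F1 (p0 + h0)%C (p1 + h1)%C = F2 (q0 + h0)%C (q1 + h1)%C) ->
  a1 = a2 /\ b1 = b2.
Proof.
  intros H1 H2 [rho [Hrho Hrho']].
  assert (E0 : F1 p0 p1 = F2 q0 q1).
  { specialize (Hrho' 0%C 0%C ltac:(rewrite Cmod_0; lra) ltac:(rewrite Cmod_0; lra)). rewrite !Cplus_0_r in Hrho'. auto. }
  assert (Gen : forall eps, 0 < eps -> exists t, 0 < t /\ t < rho /\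
     (forall h0 h1, Cmod h0 < t * 2 -> Cmod h1 < t * 2 ->
       Cmod (F1 (p0 + h0)%C (p1 + h1)%C - F1 p0 p1 - a1 * h0 - b1 * h1)%C <= eps / 2 * (Cmod h0 + Cmod h1) /\
       Cmod (F2 (q0 + h0)%C (q1 + h1)%C - F2 q0 q1 - a2 * h0 - b2 * h1)%C <= eps / 2 * (Cmod h0 + Cmod h1))).
  { intros eps Heps.
    destruct (H1 (eps / 2) ltac:(lra)) as [d1 [Hd1 Hd1']]. destruct (H2 (eps / 2) ltac:(lra)) as [d2 [Hd2 Hd2']].
    exists (Rmin (Rmin d1 d2) rho / 2). 
    pose proof (Rmin_l (Rmin d1 d2) rho). pose proof (Rmin_r (Rmin d1 d2) rho). pose proof (Rmin_l d1 d2). pose proof (Rmin_r d1 d2).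
    assert (0 < Rmin (Rmin d1 d2) rho) by (repeat apply Rmin_pos; auto).
    split; [lra|]. split; [lra|]. intros h0 h1 Hh0 Hh1. split; [apply Hd1'|apply Hd2']; lra. }
  split.
  - assert (E : (a1 - a2)%C = 0%C).
    { apply Key0. intros eps Heps. destruct (Gen eps Heps) as [t [Ht [Ht' Hg]]].
      exists t. split; auto.
      assert (Ct : Cmod (RtoC t) = t) by (rewrite Cmod_R; apply Rabs_pos_eq; lra).
      destruct (Hg (RtoC t) 0%C ltac:(lra) ltac:(rewrite Cmod_0; lra)) as [A1 A2].
      rewrite Ct, Cmod_0 in A1, A2.
      rewrite (Hrho' (RtoC t) 0%C ltac:(lra) ltac:(rewrite Cmod_0; lra)), E0 in A1.
      replace ((a1 - a2) * t)%C with ((F2 (q0 + t)%C (q1 + 0)%C - F2 q0 q1 - a2 * t - b2 * 0)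
         - (F2 (q0 + t)%C (q1 + 0)%C - F2 q0 q1 - a1 * t - b1 * 0))%C by ring.
      unfold Cminus at 1. eapply Rle_trans; [apply Cmod_triangle|]. rewrite Cmod_opp. lra. }
    replace a1 with ((a1 - a2) + a2)%C by ring. rewrite E. ring.
  - assert (E : (b1 - b2)%C = 0%C).
    { apply Key0. intros eps Heps. destruct (Gen eps Heps) as [t [Ht [Ht' Hg]]].
      exists t. split; auto.
      assert (Ct : Cmod (RtoC t) = t) by (rewrite Cmod_R; apply Rabs_pos_eq; lra).
      destruct (Hg 0%C (RtoC t) ltac:(rewrite Cmod_0; lra) ltac:(lra)) as [A1 A2].
      rewrite Ct, Cmod_0 in A1, A2.
      rewrite (Hrho' 0%C (RtoC t) ltac:(rewrite Cmod_0; lra) ltac:(lra)), E0 in A1.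
      replace ((b1 - b2) * t)%C with ((F2 (q0 + 0)%C (q1 + t)%C - F2 q0 q1 - a2 * 0 - b2 * t)
         - (F2 (q0 + 0)%C (q1 + t)%C - F2 q0 q1 - a1 * 0 - b1 * t))%C by ring.
      unfold Cminus at 1. eapply Rle_trans; [apply Cmod_triangle|]. rewrite Cmod_opp. lra. }
    replace b1 with ((b1 - b2) + b2)%C by ring. rewrite E. ring.
Qed.

Lemma lub_finite (E : R -> Prop) x B : E x -> (forall y, E y -> y <= B) ->
  x <= real (Lub_Rbar E) /\ real (Lub_Rbar E) <= B.
Proof.
  intros Hx HB. destruct (Lub_Rbar_correct E) as [Hub Hlub].
  assert (L1 : Rbar_le x (Lub_Rbar E)) by (apply Hub; auto).
  assert (L2 : Rbar_le (Lub_Rbar E) B) by (apply Hlub; intros y Hy; simpl; apply HB; auto).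
  destruct (Lub_Rbar E) as [l| |]; simpl in *; try contradiction. auto.
Qed.

Lemma vnorm2_ge0 a b : 0 <= vnorm2 a b.
Proof. unfold vnorm2. apply sqrt_pos. Qed.

Lemma Cmod_le_vnorm2_l a b : Cmod a <= vnorm2 a b.
Proof. unfold vnorm2. rewrite <- (sqrt_pow2 (Cmod a)) at 1 by apply Cmod_ge_0. apply sqrt_le_1_alt.
  pose proof (pow2_ge_0 (Cmod b)). lra. Qed.
Lemma Cmod_le_vnorm2_r a b : Cmod b <= vnorm2 a b.
Proof. unfold vnorm2. rewrite <- (sqrt_pow2 (Cmod b)) at 1 by apply Cmod_ge_0. apply sqrt_le_1_alt.
  pose proof (pow2_ge_0 (Cmod a)). lra. Qed.

Lemma vnorm2_le a b : vnorm2 a b <= Cmod a + Cmod b.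
Proof. unfold vnorm2. pose proof (Cmod_ge_0 a). pose proof (Cmod_ge_0 b).
  rewrite <- (sqrt_pow2 (Cmod a + Cmod b)) by lra. apply sqrt_le_1_alt. nra. Qed.

Lemma vnorm2_scal (c a b : C) : vnorm2 (c * a)%C (c * b)%C = Cmod c * vnorm2 a b.
Proof.
  unfold vnorm2. rewrite !Cmod_mult. rewrite <- (sqrt_pow2 (Cmod c)) at 3 by apply Cmod_ge_0.
  rewrite <- sqrt_mult_alt by (apply pow2_ge_0). f_equal. ring.
Qed.

Lemma cs2 A B x y : 0 <= A -> 0 <= B -> A * Rabs x + B * Rabs y <= sqrt (A ^ 2 + B ^ 2) * sqrt (x ^ 2 + y ^ 2).
Proof.
  intros HA HB. rewrite <- sqrt_mult_alt by (pose proof (pow2_ge_0 A); pose proof (pow2_ge_0 B); lra).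
  pose proof (Rabs_pos x). pose proof (Rabs_pos y).
  rewrite <- (sqrt_pow2 (A * Rabs x + B * Rabs y)) by nra.
  apply sqrt_le_1_alt. rewrite <- (pow2_abs x), <- (pow2_abs y).
  set (X := Rabs x) in *. set (Y := Rabs y) in *. simpl. pose proof (Rle_0_sqr (A * Y - B * X)). unfold Rsqr in *. nra.
Qed.

Lemma CS_C (a b : C) (t0 t1 : R) : Cmod (a * RtoC t0 + b * RtoC t1)%C <= vnorm2 a b * sqrt (t0 ^ 2 + t1 ^ 2).
Proof.
  eapply Rle_trans; [apply Cmod_triangle|]. rewrite !Cmod_mult, !Cmod_R.
  apply cs2; apply Cmod_ge_0.
Qed.

Lemma mxnorm2_bound p q r s (v0 v1 : C) : vnorm2 v0 v1 = 1 ->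
  vnorm2 (p * v0 + q * v1)%C (r * v0 + s * v1)%C <= Cmod p + Cmod q + Cmod r + Cmod s.
Proof.
  intros Hv. pose proof (Cmod_le_vnorm2_l v0 v1). pose proof (Cmod_le_vnorm2_r v0 v1).
  pose proof (Cmod_ge_0 v0). pose proof (Cmod_ge_0 v1).
  pose proof (Cmod_ge_0 p). pose proof (Cmod_ge_0 q). pose proof (Cmod_ge_0 r). pose proof (Cmod_ge_0 s).
  eapply Rle_trans; [apply vnorm2_le|].
  pose proof (Cmod_triangle (p * v0) (q * v1)). pose proof (Cmod_triangle (r * v0) (s * v1)).
  rewrite !Cmod_mult in *. nra.
Qed.

Lemma mxnorm2_le p q r s : mxnorm2 p q r s <= Cmod p + Cmod q + Cmod r + Cmod s /\ 0 <= mxnorm2 p q r s.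
Proof.
  unfold mxnorm2.
  assert (E1 : vnorm2 1 0 = 1). { unfold vnorm2. rewrite Cmod_1, Cmod_0. replace (1 ^ 2 + 0 ^ 2) with 1 by ring. apply sqrt_1. }
  destruct (lub_finite (fun x => exists v0 v1 : C, vnorm2 v0 v1 = 1 /\
     x = vnorm2 (p * v0 + q * v1)%C (r * v0 + s * v1)%C) (vnorm2 (p * 1 + q * 0)%C (r * 1 + s * 0)%C) (Cmod p + Cmod q + Cmod r + Cmod s)) as [L1 L2].
  - exists 1%C, 0%C. split; auto.
  - intros y [v0 [v1 [Hv ->]]]. apply mxnorm2_bound; auto.
  - split; auto. pose proof (vnorm2_ge0 (p * 1 + q * 0)%C (r * 1 + s * 0)%C). lra.
Qed.

Lemma mxnorm2_apply p q r s (v0 v1 : C) :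
  vnorm2 (p * v0 + q * v1)%C (r * v0 + s * v1)%C <= mxnorm2 p q r s * vnorm2 v0 v1.
Proof.
  pose proof (vnorm2_ge0 v0 v1) as Hn.
  destruct (Req_dec (vnorm2 v0 v1) 0) as [Z|Z].
  - assert (Cmod v0 = 0) by (pose proof (Cmod_le_vnorm2_l v0 v1); pose proof (Cmod_ge_0 v0); lra).
    assert (Cmod v1 = 0) by (pose proof (Cmod_le_vnorm2_r v0 v1); pose proof (Cmod_ge_0 v1); lra).
    apply Cmod_eq_0 in H. apply Cmod_eq_0 in H0. subst. rewrite Z.
    rewrite !Cmult_0_r, !Cplus_0_r.
    unfold vnorm2. rewrite Cmod_0. replace (0 ^ 2 + 0 ^ 2) with 0 by ring. rewrite sqrt_0. lra.
  - set (n := vnorm2 v0 v1) in *.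
    set (u0 := (RtoC (/ n) * v0)%C). set (u1 := (RtoC (/ n) * v1)%C).
    assert (Hu : vnorm2 u0 u1 = 1).
    { unfold u0, u1. rewrite vnorm2_scal, Cmod_R, Rabs_pos_eq by (left; apply Rinv_0_lt_compat; lra).
      fold n. field. auto. }
    assert (Hel : vnorm2 (p * u0 + q * u1)%C (r * u0 + s * u1)%C <= mxnorm2 p q r s).
    { unfold mxnorm2.
      destruct (lub_finite (fun x => exists v0 v1 : C, vnorm2 v0 v1 = 1 /\
     x = vnorm2 (p * v0 + q * v1)%C (r * v0 + s * v1)%C) (vnorm2 (p * u0 + q * u1)%C (r * u0 + s * u1)%C) (Cmod p + Cmod q + Cmod r + Cmod s)) as [L1 L2].
      - exists u0, u1. split; auto.
      - intros y [w0 [w1 [Hw ->]]]. apply mxnorm2_bound; auto.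
      - exact L1. }
    replace (p * v0 + q * v1)%C with (RtoC n * (p * u0 + q * u1))%C.
    2:{ unfold u0, u1. replace (RtoC n * (p * (RtoC (/ n) * v0) + q * (RtoC (/ n) * v1)))%C
        with ((RtoC n * RtoC (/ n)) * (p * v0 + q * v1))%C by ring. rewrite <- RtoC_mult, Rinv_r by auto. ring. }
    replace (r * v0 + s * v1)%C with (RtoC n * (r * u0 + s * u1))%C.
    2:{ unfold u0, u1. replace (RtoC n * (r * (RtoC (/ n) * v0) + s * (RtoC (/ n) * v1)))%C
        with ((RtoC n * RtoC (/ n)) * (r * v0 + s * v1))%C by ring. rewrite <- RtoC_mult, Rinv_r by auto. ring. }
    rewrite vnorm2_scal, Cmod_R, Rabs_pos_eq by lra. rewrite Rmult_comm. apply Rmult_le_compat_r; lra.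
Qed.


Lemma Im_shift (z : C) (r : R) : Im (z + RtoC r)%C = Im z.
Proof. destruct z; simpl. ring. Qed.
Lemma Re_shift (z : C) (r : R) : Re (z + RtoC r)%C = Re z + r.
Proof. destruct z; simpl. ring. Qed.
Lemma Im_add (z h : C) : Im (z + h)%C = Im z + Im h.
Proof. destruct z, h; simpl. ring. Qed.

Lemma reduce_real (x : R) : exists n : Z, 0 <= x + 2 * PI * IZR n < 2 * PI.
Proof.
  pose proof PI_RGT_0. set (q := x / (2 * PI)). destruct (archimed q) as [A1 A2].
  exists (- (up q - 1))%Z. rewrite opp_IZR, minus_IZR. simpl.
  assert (E : x = 2 * PI * q) by (unfold q; field; lra).
  split.
  - rewrite E. assert (IZR (up q) - 1 <= q) by lra. nra.
  - rewrite E. assert (q < IZR (up q)) by lra. nra.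
Qed.

Section Main.
Variables (G : nat -> C -> C -> C) (D : nat -> nat -> C -> C -> C) (H : nat -> nat -> nat -> C -> C -> C)
  (R0 : R) (U : C -> C -> Prop).
Hypothesis HR0 : 0 < R0.
Hypothesis HUo : openC2 U.
Hypothesis HUs : forall z0 z1, inWcl R0 z0 -> inWcl R0 z1 -> U z0 z1.
Hypothesis HUd : forall j, (j < 3)%nat ->
       cdiff2_on U (G j) (D j 0%nat) (D j 1%nat) /\
       cdiff2_on U (D j 0%nat) (H j 0%nat 0%nat) (H j 0%nat 1%nat) /\
       cdiff2_on U (D j 1%nat) (H j 1%nat 0%nat) (H j 1%nat 1%nat).
Hypothesis Hper : forall j z0 z1, (j < 3)%nat -> inWcl R0 z0 -> inWcl R0 z1 ->
     G j (z0 + RtoC (2 * PI))%C z1 = G j z0 z1 /\ G j z0 (z1 + RtoC (2 * PI))%C = G j z0 z1.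

Definition periodicW (F : C -> C -> C) : Prop := forall z0 z1, inW R0 z0 -> inW R0 z1 ->
  F (z0 + RtoC (2 * PI))%C z1 = F z0 z1 /\ F z0 (z1 + RtoC (2 * PI))%C = F z0 z1.

Lemma rho_ex z0 z1 : inW R0 z0 -> inW R0 z1 -> exists rho, 0 < rho /\ forall h0 h1, Cmod h0 < rho -> Cmod h1 < rho ->
  inW R0 (z0 + h0)%C /\ inW R0 (z1 + h1)%C.
Proof.
  unfold inW. intros H0 H1. exists (Rmin (R0 - Rabs (Im z0)) (R0 - Rabs (Im z1))).
  split; [apply Rmin_pos; lra|]. intros h0 h1 Hh0 Hh1.
  pose proof (Rmin_l (R0 - Rabs (Im z0)) (R0 - Rabs (Im z1))). pose proof (Rmin_r (R0 - Rabs (Im z0)) (R0 - Rabs (Im z1))).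
  pose proof (im_le_Cmod h0). pose proof (im_le_Cmod h1).
  rewrite !Im_add. split; eapply Rle_lt_trans; try apply Rabs_triang; lra.
Qed.

Lemma inW_cl z : inW R0 z -> inWcl R0 z.
Proof. unfold inW, inWcl. lra. Qed.
Lemma inW_shift z r : inW R0 z -> inW R0 (z + RtoC r)%C.
Proof. unfold inW. rewrite Im_shift. auto. Qed.
Lemma inWcl_shift z r : inWcl R0 z -> inWcl R0 (z + RtoC r)%C.
Proof. unfold inWcl. rewrite Im_shift. auto. Qed.

Lemma per_from_deriv (F : C -> C -> C) (A B : C -> C -> C) :
  cdiff2_on U F A B -> periodicW F -> periodicW A /\ periodicW B.
Proof.
  intros Hd Hp.
  assert (K : forall z0 z1, inW R0 z0 -> inW R0 z1 ->
     (A (z0 + RtoC (2 * PI))%C z1 = A z0 z1 /\ B (z0 + RtoC (2 * PI))%C z1 = B z0 z1) /\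
     (A z0 (z1 + RtoC (2 * PI))%C = A z0 z1 /\ B z0 (z1 + RtoC (2 * PI))%C = B z0 z1)).
  { intros z0 z1 H0 H1. destruct (rho_ex z0 z1 H0 H1) as [rho [Hrho Hrho']].
    split.
    - apply (deriv_unique F F _ _ _ _ (z0 + RtoC (2 * PI))%C z1 z0 z1).
      + unfold cdiff_at; apply Hd. apply HUs; apply inW_cl; [apply inW_shift|]; auto.
      + unfold cdiff_at; apply Hd. apply HUs; apply inW_cl; auto.
      + exists rho. split; auto. intros h0 h1 Hh0 Hh1. destruct (Hrho' h0 h1 Hh0 Hh1).
        replace (z0 + RtoC (2 * PI) + h0)%C with (z0 + h0 + RtoC (2 * PI))%C by ring.
        apply Hp; auto.
    - apply (deriv_unique F F _ _ _ _ z0 (z1 + RtoC (2 * PI))%C z0 z1).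
      + unfold cdiff_at; apply Hd. apply HUs; apply inW_cl; [|apply inW_shift]; auto.
      + unfold cdiff_at; apply Hd. apply HUs; apply inW_cl; auto.
      + exists rho. split; auto. intros h0 h1 Hh0 Hh1. destruct (Hrho' h0 h1 Hh0 Hh1).
        replace (z1 + RtoC (2 * PI) + h1)%C with (z1 + h1 + RtoC (2 * PI))%C by ring.
        apply Hp; auto. }
  split; intros z0 z1 H0 H1; destruct (K z0 z1 H0 H1) as [[? ?] [? ?]]; split; auto.
Qed.

Lemma per_G j : (j < 3)%nat -> periodicW (G j).
Proof. intros Hj z0 z1 H0 H1. apply Hper; auto; apply inW_cl; auto. Qed.

Lemma per_D j : (j < 3)%nat -> periodicW (D j 0%nat) /\ periodicW (D j 1%nat).
Proof. intros Hj. destruct (HUd j Hj) as [H1 _]. apply (per_from_deriv _ _ _ H1 (per_G j Hj)). Qed.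

Lemma per_H j : (j < 3)%nat -> periodicW (H j 0%nat 0%nat) /\ periodicW (H j 0%nat 1%nat) /\
  periodicW (H j 1%nat 0%nat) /\ periodicW (H j 1%nat 1%nat).
Proof.
  intros Hj. destruct (HUd j Hj) as [_ [H1 H2]]. destruct (per_D j Hj) as [P0 P1].
  destruct (per_from_deriv _ _ _ H1 P0). destruct (per_from_deriv _ _ _ H2 P1). tauto.
Qed.

Lemma per_nat (F : C -> C -> C) : periodicW F -> forall (n : nat) z0 z1, inW R0 z0 -> inW R0 z1 ->
  F (z0 + RtoC (2 * PI * INR n))%C z1 = F z0 z1 /\ F z0 (z1 + RtoC (2 * PI * INR n))%C = F z0 z1 /\
  F (z0 - RtoC (2 * PI * INR n))%C z1 = F z0 z1 /\ F z0 (z1 - RtoC (2 * PI * INR n))%C = F z0 z1.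
Proof.
  intros Hp n. induction n as [|n IH]; intros z0 z1 H0 H1.
  - simpl. rewrite Rmult_0_r. replace (z0 + RtoC 0)%C with z0 by ring. replace (z1 + RtoC 0)%C with z1 by ring.
    replace (z0 - RtoC 0)%C with z0 by ring. replace (z1 - RtoC 0)%C with z1 by ring. tauto.
  - rewrite S_INR.
    replace (z0 + RtoC (2 * PI * (INR n + 1)))%C with (z0 + RtoC (2 * PI * INR n) + RtoC (2 * PI))%C by (rewrite !RtoC_mult, !RtoC_plus; ring).
    replace (z1 + RtoC (2 * PI * (INR n + 1)))%C with (z1 + RtoC (2 * PI * INR n) + RtoC (2 * PI))%C by (rewrite !RtoC_mult, !RtoC_plus; ring).
    replace (z0 - RtoC (2 * PI * (INR n + 1)))%C with (z0 - RtoC (2 * PI) - RtoC (2 * PI * INR n))%C by (rewrite !RtoC_mult, !RtoC_plus; ring).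
    replace (z1 - RtoC (2 * PI * (INR n + 1)))%C with (z1 - RtoC (2 * PI) - RtoC (2 * PI * INR n))%C by (rewrite !RtoC_mult, !RtoC_plus; ring).
    assert (M0 : inW R0 (z0 - RtoC (2 * PI))%C) by (unfold Cminus; rewrite <- RtoC_opp; apply inW_shift; auto).
    assert (M1 : inW R0 (z1 - RtoC (2 * PI))%C) by (unfold Cminus; rewrite <- RtoC_opp; apply inW_shift; auto).
    destruct (IH z0 z1 H0 H1) as [I1 [I2 [I3 I4]]].
    destruct (IH (z0 - RtoC (2 * PI))%C z1 M0 H1) as [_ [_ [J3 _]]].
    destruct (IH z0 (z1 - RtoC (2 * PI))%C H0 M1) as [_ [_ [_ J4]]].
    rewrite J3, J4.
    destruct (Hp (z0 + RtoC (2 * PI * INR n))%C z1 ltac:(apply inW_shift; auto) H1) as [K1 _].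
    destruct (Hp z0 (z1 + RtoC (2 * PI * INR n))%C H0 ltac:(apply inW_shift; auto)) as [_ K2].
    destruct (Hp (z0 - RtoC (2 * PI))%C z1 M0 H1) as [K3 _].
    destruct (Hp z0 (z1 - RtoC (2 * PI))%C H0 M1) as [_ K4].
    replace (z0 - RtoC (2 * PI) + RtoC (2 * PI))%C with z0 in K3 by ring.
    replace (z1 - RtoC (2 * PI) + RtoC (2 * PI))%C with z1 in K4 by ring.
    rewrite K1, K2, I1, I2. intuition congruence.
Qed.

Lemma per_Z (F : C -> C -> C) : periodicW F -> forall (n m : Z) z0 z1, inW R0 z0 -> inW R0 z1 ->
  F (z0 + RtoC (2 * PI * IZR n))%C (z1 + RtoC (2 * PI * IZR m))%C = F z0 z1.
Proof.
  intros Hp n m z0 z1 H0 H1.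
  assert (A : forall (k : Z) w0 w1, inW R0 w0 -> inW R0 w1 ->
     F (w0 + RtoC (2 * PI * IZR k))%C w1 = F w0 w1 /\ F w0 (w1 + RtoC (2 * PI * IZR k))%C = F w0 w1).
  { intros k w0 w1 G0 G1. destruct k as [|p|p].
    - simpl. rewrite Rmult_0_r. replace (w0 + RtoC 0)%C with w0 by ring. replace (w1 + RtoC 0)%C with w1 by ring. tauto.
    - rewrite <- (positive_nat_Z p), <- INR_IZR_INZ. destruct (per_nat F Hp (Pos.to_nat p) w0 w1 G0 G1). tauto.
    - replace (IZR (Z.neg p)) with (- INR (Pos.to_nat p)) by (rewrite <- Pos2Z.opp_pos, opp_IZR, <- (positive_nat_Z p), <- INR_IZR_INZ; reflexivity).
      replace (2 * PI * - INR (Pos.to_nat p)) with (- (2 * PI * INR (Pos.to_nat p))) by ring.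
      rewrite RtoC_opp. fold (Cminus w0 (RtoC (2 * PI * INR (Pos.to_nat p)))). fold (Cminus w1 (RtoC (2 * PI * INR (Pos.to_nat p)))).
      destruct (per_nat F Hp (Pos.to_nat p) w0 w1 G0 G1). tauto. }
  destruct (A n z0 (z1 + RtoC (2 * PI * IZR m))%C H0 ltac:(apply inW_shift; auto)) as [E1 _]. rewrite E1.
  destruct (A m z0 z1 H0 H1). tauto.
Qed.

Lemma reduce2 (F : C -> C -> C) : periodicW F -> forall z0 z1, inW R0 z0 -> inW R0 z1 ->
  exists w0 w1, 0 <= Re w0 < 2 * PI /\ 0 <= Re w1 < 2 * PI /\ Im w0 = Im z0 /\ Im w1 = Im z1 /\ F w0 w1 = F z0 z1.
Proof.
  intros Hp z0 z1 H0 H1. destruct (reduce_real (Re z0)) as [n Hn]. destruct (reduce_real (Re z1)) as [m Hm].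
  exists (z0 + RtoC (2 * PI * IZR n))%C, (z1 + RtoC (2 * PI * IZR m))%C.
  rewrite !Re_shift, !Im_shift. repeat split; try lra. apply per_Z; auto.
Qed.

Definition Phi (w0 w1 : C) : R :=
  Cmod (D 0%nat 0%nat w0 w1) + Cmod (D 0%nat 1%nat w0 w1) + Cmod (D 1%nat 0%nat w0 w1) +
  Cmod (D 1%nat 1%nat w0 w1) + Cmod (D 2%nat 0%nat w0 w1) + Cmod (D 2%nat 1%nat w0 w1).

Lemma Phi_loc z0 z1 : inWcl R0 z0 -> inWcl R0 z1 -> locbdd U Phi z0 z1.
Proof.
  intros H0 H1. pose proof (HUs z0 z1 H0 H1) as Hu.
  destruct (HUd 0 ltac:(lia)) as [_ [A0 A1]]. destruct (HUd 1 ltac:(lia)) as [_ [B0 B1]].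
  destruct (HUd 2 ltac:(lia)) as [_ [C0' C1']].
  unfold Phi. repeat apply locbdd_plus; eapply locbdd_cdiff; eauto.
Qed.

Definition BoxB (r M : R) : Prop := 0 < r /\ forall w0 w1,
  - r <= Re w0 <= 2 * PI + r -> - R0 - r <= Im w0 <= R0 + r ->
  - r <= Re w1 <= 2 * PI + r -> - R0 - r <= Im w1 <= R0 + r ->
  U w0 w1 /\ forall j k, (j < 3)%nat -> (k < 2)%nat -> Cmod (D j k w0 w1) <= M.

Lemma BoxB_ex : exists r M, BoxB r M.
Proof.
  pose proof PI_RGT_0.
  destruct (compact_bound U Phi 0 (2 * PI) (- R0) R0 ltac:(lra) ltac:(lra)) as [r [Hr [M HM]]].
  { intros z0 z1 A1 A2 A3 A4. apply Phi_loc; unfold inWcl; apply Rabs_le; lra. }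
  exists r, M. split; auto. intros w0 w1 A1 A2 A3 A4.
  replace (0 - r) with (- r) in HM by ring. replace (- R0 - r) with (- R0 - r) in HM by ring.
  replace (2 * PI + r) with (2 * PI + r) in HM by ring.
  destruct (HM w0 w1 A1 A2 A3 A4) as [HU HP]. split; auto.
  intros j k Hj Hk. unfold Phi in HP.
  pose proof (Cmod_ge_0 (D 0%nat 0%nat w0 w1)). pose proof (Cmod_ge_0 (D 0%nat 1%nat w0 w1)).
  pose proof (Cmod_ge_0 (D 1%nat 0%nat w0 w1)). pose proof (Cmod_ge_0 (D 1%nat 1%nat w0 w1)).
  pose proof (Cmod_ge_0 (D 2%nat 0%nat w0 w1)). pose proof (Cmod_ge_0 (D 2%nat 1%nat w0 w1)).
  destruct j as [|[|[|j]]]; try lia; destruct k as [|[|k]]; try lia; lra.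
Qed.

Section Bounds.
Variables (r M : R).
Hypothesis HB : BoxB r M.

Lemma D_strip j k z0 z1 : (j < 3)%nat -> (k < 2)%nat -> inW R0 z0 -> inW R0 z1 -> Cmod (D j k z0 z1) <= M.
Proof.
  intros Hj Hk H0 H1. destruct HB as [Hr HBB].
  assert (P : periodicW (D j k)). { destruct (per_D j Hj). destruct k as [|[|k]]; auto; lia. }
  destruct (reduce2 _ P z0 z1 H0 H1) as [w0 [w1 [A1 [A2 [A3 [A4 E]]]]]].
  rewrite <- E. unfold inW in *. destruct (Rabs_def2 _ _ H0). destruct (Rabs_def2 _ _ H1).
  apply (HBB w0 w1); auto; lra.
Qed.

Lemma H_strip j k l z0 z1 : (j < 3)%nat -> (k < 2)%nat -> (l < 2)%nat -> inW R0 z0 -> inW R0 z1 ->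
  Cmod (H j k l z0 z1) <= 4 * M / r.
Proof.
  intros Hj Hk Hl H0 H1. destruct HB as [Hr HBB].
  assert (P : periodicW (H j k l)). { destruct (per_H j Hj) as [? [? [? ?]]]. destruct k as [|[|k]]; destruct l as [|[|l]]; auto; lia. }
  assert (Cd : cdiff2_on U (D j k) (H j k 0%nat) (H j k 1%nat)).
  { destruct (HUd j Hj) as [_ [? ?]]. destruct k as [|[|k]]; auto; lia. }
  destruct (reduce2 _ P z0 z1 H0 H1) as [w0 [w1 [A1 [A2 [A3 [A4 E]]]]]].
  rewrite <- E. unfold inW in *. destruct (Rabs_def2 _ _ H0). destruct (Rabs_def2 _ _ H1).
  destruct l as [|[|l]]; [| |lia].
  - destruct w0 as [p q]. simpl in A1, A3.
    apply (cauchy_est (fun u => D j k u w1) (fun u => H j k 0%nat u w1) p q r M Hr).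
    + intros u v Hu Hv. eapply slice0; eauto. apply (HBB (u, v) w1); simpl; lra.
    + intros u v Hu Hv. apply (HBB (u, v) w1); simpl; auto; lra.
  - destruct w1 as [p q]. simpl in A2, A4.
    apply (cauchy_est (fun u => D j k w0 u) (fun u => H j k 1%nat w0 u) p q r M Hr).
    + intros u v Hu Hv. eapply slice1; eauto. apply (HBB w0 (u, v)); simpl; lra.
    + intros u v Hu Hv. apply (HBB w0 (u, v)); simpl; auto; lra.
Qed.
End Bounds.
End Main.


Definition hasderR (phi : R -> C) (d : C) (s : R) : Prop :=
  forall eps, 0 < eps -> exists delta, 0 < delta /\ forall h, Rabs h < delta ->
    Cmod (phi (Rplus s h) - phi s - RtoC h * d)%C <= eps * Rabs h.

Lemma Re_le_Cmod' (c : C) : Re c <= Cmod c.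
Proof. pose proof (re_le_Cmod c). pose proof (Rle_abs (Re c)). lra. Qed.

Lemma mvt_C (phi phi' : R -> C) M : (forall s, 0 <= s <= 1 -> hasderR phi (phi' s) s) ->
  (forall s, 0 <= s <= 1 -> Cmod (phi' s) <= M) -> Cmod (phi 1 - phi 0)%C <= M.
Proof.
  intros Hd HM. set (Dl := (phi 1 - phi 0)%C).
  destruct (Req_dec (Cmod Dl) 0) as [Z|Z].
  { rewrite Z. pose proof (HM 0 ltac:(lra)). pose proof (Cmod_ge_0 (phi' 0)). lra. }
  pose proof (Cmod_ge_0 Dl) as HD0.
  set (g := fun s => Re (Cconj Dl * phi s)%C). set (g' := fun s => Re (Cconj Dl * phi' s)%C).
  assert (Hg : forall s, 0 <= s <= 1 -> derivable_pt_lim g s (g' s)).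
  { intros s Hs eps Heps.
    destruct (Hd s Hs (eps / (2 * (Cmod Dl + 1))) ltac:(apply Rdiv_lt_0_compat; lra)) as [d [Hd0 Hd1]].
    exists (mkposreal d Hd0). intros h Hh0 Hh. simpl in Hh. specialize (Hd1 h Hh).
    unfold g, g'.
    assert (E : (Re (Cconj Dl * phi (Rplus s h))%C - Re (Cconj Dl * phi s)%C) / h - Re (Cconj Dl * phi' s)%C
       = Re (Cconj Dl * (phi (Rplus s h) - phi s - RtoC h * phi' s))%C / h).
    { destruct Dl as [a b], (phi (Rplus s h)) as [p q], (phi s) as [u v], (phi' s) as [m n].
      unfold Cconj, Cmult, Cminus, Cplus, Copp, RtoC; simpl. field. auto. }
    rewrite E. unfold Rdiv. rewrite Rabs_mult, Rabs_inv.
    pose proof (re_le_Cmod (Cconj Dl * (phi (Rplus s h) - phi s - RtoC h * phi' s))%C) as R1.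
    rewrite Cmod_mult, Cmod_conj in R1.
    assert (0 < Rabs h) by (apply Rabs_pos_lt; auto).
    apply Rmult_lt_reg_r with (Rabs h); auto. rewrite Rmult_assoc, Rinv_l by lra. rewrite Rmult_1_r.
    eapply Rle_lt_trans; [exact R1|].
    assert (Cmod Dl * Cmod (phi (Rplus s h) - phi s - RtoC h * phi' s)%C <= Cmod Dl * (eps / (2 * (Cmod Dl + 1)) * Rabs h))
      by (apply Rmult_le_compat_l; auto).
    assert (Cmod Dl * (eps / (2 * (Cmod Dl + 1)) * Rabs h) < eps * Rabs h).
    { replace (Cmod Dl * (eps / (2 * (Cmod Dl + 1)) * Rabs h)) with ((Cmod Dl / (Cmod Dl + 1)) * (eps * Rabs h) / 2) by (field; lra).
      assert (Cmod Dl / (Cmod Dl + 1) <= 1). { apply Rmult_le_reg_r with (Cmod Dl + 1); [lra|]. unfold Rdiv. rewrite Rmult_assoc, Rinv_l by lra. lra. }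
      assert (0 < eps * Rabs h) by nra. nra. }
    lra. }
  destruct (MVT_gen g 0 1 g') as [c [Hc Ec]].
  - intros x Hx. rewrite Rmin_left, Rmax_right in Hx by lra. apply is_derive_Reals. apply Hg. lra.
  - intros x Hx. rewrite Rmin_left, Rmax_right in Hx by lra. apply derivable_continuous_pt. exists (g' x). apply Hg. auto.
  - rewrite Rmin_left, Rmax_right in Hc by lra.
    assert (E1 : g 1 - g 0 = Cmod Dl ^ 2).
    { unfold g. rewrite Cmod2_alt. unfold Dl. destruct (phi 1) as [p q], (phi 0) as [u v].
      unfold Cconj, Cmult, Cminus, Cplus, Copp; simpl. ring. }
    assert (E2 : g' c <= Cmod Dl * M).
    { unfold g'. eapply Rle_trans; [apply Re_le_Cmod'|]. rewrite Cmod_mult, Cmod_conj.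
      apply Rmult_le_compat_l; auto. }
    rewrite E1, Rminus_0_r, Rmult_1_r in Ec.
    assert (0 < Cmod Dl) by lra. simpl in Ec. nra.
Qed.

Lemma hasderR_comb (p1 p2 : R -> C) d1 d2 (c1 c2 : C) s : hasderR p1 d1 s -> hasderR p2 d2 s ->
  hasderR (fun u => c1 * p1 u + c2 * p2 u)%C (c1 * d1 + c2 * d2)%C s.
Proof.
  intros H1 H2 eps Heps.
  set (K := Cmod c1 + Cmod c2 + 1). assert (HK : 0 < K) by (unfold K; pose proof (Cmod_ge_0 c1); pose proof (Cmod_ge_0 c2); lra).
  destruct (H1 (eps / K) ltac:(apply Rdiv_lt_0_compat; lra)) as [a1 [Ha1 Ha1']].
  destruct (H2 (eps / K) ltac:(apply Rdiv_lt_0_compat; lra)) as [a2 [Ha2 Ha2']].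
  exists (Rmin a1 a2). split; [apply Rmin_pos; auto|]. intros h Hh.
  pose proof (Rmin_l a1 a2). pose proof (Rmin_r a1 a2).
  specialize (Ha1' h ltac:(lra)). specialize (Ha2' h ltac:(lra)).
  replace (c1 * p1 (Rplus s h) + c2 * p2 (Rplus s h) - (c1 * p1 s + c2 * p2 s) - RtoC h * (c1 * d1 + c2 * d2))%C
    with (c1 * (p1 (Rplus s h) - p1 s - RtoC h * d1) + c2 * (p2 (Rplus s h) - p2 s - RtoC h * d2))%C by ring.
  eapply Rle_trans; [apply Cmod_triangle|]. rewrite !Cmod_mult.
  pose proof (Cmod_ge_0 c1). pose proof (Cmod_ge_0 c2). pose proof (Rabs_pos h).
  assert (Cmod c1 * Cmod (p1 (Rplus s h) - p1 s - RtoC h * d1)%C <= Cmod c1 * (eps / K * Rabs h)) by (apply Rmult_le_compat_l; auto).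
  assert (Cmod c2 * Cmod (p2 (Rplus s h) - p2 s - RtoC h * d2)%C <= Cmod c2 * (eps / K * Rabs h)) by (apply Rmult_le_compat_l; auto).
  assert ((Cmod c1 + Cmod c2) * (eps / K * Rabs h) <= eps * Rabs h).
  { replace ((Cmod c1 + Cmod c2) * (eps / K * Rabs h)) with ((Cmod c1 + Cmod c2) / K * (eps * Rabs h)) by (field; lra).
    assert ((Cmod c1 + Cmod c2) / K <= 1). { apply Rmult_le_reg_r with K; [lra|]. unfold Rdiv. rewrite Rmult_assoc, Rinv_l by lra. unfold K. lra. }
    assert (0 <= eps * Rabs h) by nra. nra. }
  lra.
Qed.

Lemma hasderR_chain U F A B (p0 p1 q0 q1 : C) s : cdiff2_on U F A B ->
  U (p0 + RtoC s * q0)%C (p1 + RtoC s * q1)%C ->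
  hasderR (fun u => F (p0 + RtoC u * q0)%C (p1 + RtoC u * q1)%C)
    (A (p0 + RtoC s * q0)%C (p1 + RtoC s * q1)%C * q0 + B (p0 + RtoC s * q0)%C (p1 + RtoC s * q1)%C * q1)%C s.
Proof.
  intros Hd HU eps Heps.
  set (K := Cmod q0 + Cmod q1 + 1). assert (HK : 0 < K) by (unfold K; pose proof (Cmod_ge_0 q0); pose proof (Cmod_ge_0 q1); lra).
  destruct (Hd _ _ HU (eps / K) ltac:(apply Rdiv_lt_0_compat; lra)) as [d [Hd0 Hd1]].
  exists (d / K). split; [apply Rdiv_lt_0_compat; lra|]. intros h Hh.
  pose proof (Cmod_ge_0 q0). pose proof (Cmod_ge_0 q1). pose proof (Rabs_pos h).
  assert (Hq0 : Cmod (RtoC h * q0)%C < d).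
  { rewrite Cmod_mult, Cmod_R. apply Rmult_lt_reg_r with (/ K). apply Rinv_0_lt_compat; lra.
    apply Rle_lt_trans with (Rabs h * K * / K). { rewrite Rmult_assoc. rewrite (Rmult_assoc (Rabs h)). apply Rmult_le_compat_l; auto. apply Rmult_le_compat_r. left; apply Rinv_0_lt_compat; lra. unfold K; lra. }
    rewrite Rmult_assoc, Rinv_r, Rmult_1_r by lra. exact Hh. }
  assert (Hq1 : Cmod (RtoC h * q1)%C < d).
  { rewrite Cmod_mult, Cmod_R. apply Rmult_lt_reg_r with (/ K). apply Rinv_0_lt_compat; lra.
    apply Rle_lt_trans with (Rabs h * K * / K). { rewrite Rmult_assoc. rewrite (Rmult_assoc (Rabs h)). apply Rmult_le_compat_l; auto. apply Rmult_le_compat_r. left; apply Rinv_0_lt_compat; lra. unfold K; lra. }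
    rewrite Rmult_assoc, Rinv_r, Rmult_1_r by lra. exact Hh. }
  specialize (Hd1 _ _ Hq0 Hq1).
  replace (p0 + RtoC (Rplus s h) * q0)%C with (p0 + RtoC s * q0 + RtoC h * q0)%C by (rewrite RtoC_plus; ring).
  replace (p1 + RtoC (Rplus s h) * q1)%C with (p1 + RtoC s * q1 + RtoC h * q1)%C by (rewrite RtoC_plus; ring).
  match goal with |- Cmod ?X <= _ => replace X with
    (F (p0 + RtoC s * q0 + RtoC h * q0)%C (p1 + RtoC s * q1 + RtoC h * q1)%C - F (p0 + RtoC s * q0)%C (p1 + RtoC s * q1)%C
     - A (p0 + RtoC s * q0)%C (p1 + RtoC s * q1)%C * (RtoC h * q0) - B (p0 + RtoC s * q0)%C (p1 + RtoC s * q1)%C * (RtoC h * q1))%C by ring end.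
  eapply Rle_trans; [exact Hd1|]. rewrite !Cmod_mult, Cmod_R.
  replace (eps / K * (Rabs h * Cmod q0 + Rabs h * Cmod q1)) with (eps * Rabs h * ((Cmod q0 + Cmod q1) / K)) by (field; lra).
  assert ((Cmod q0 + Cmod q1) / K <= 1). { apply Rmult_le_reg_r with K; [lra|]. unfold Rdiv. rewrite Rmult_assoc, Rinv_l by lra. unfold K; lra. }
  assert (0 <= eps * Rabs h) by nra. nra.
Qed.


Lemma dist_min t : 0 <= t < 2 * PI -> dist2piZ t = Rmin t (2 * PI - t).
Proof.
  intros Ht. pose proof PI_RGT_0. unfold dist2piZ.
  rewrite (is_glb_Rbar_unique _ (Finite (Rmin t (2 * PI - t)))); [reflexivity|].
  split.
  - intros x [k ->]. simpl. destruct (Z.le_gt_cases k 0) as [Hk|Hk].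
    + apply IZR_le in Hk. rewrite Rabs_pos_eq by nra. pose proof (Rmin_l t (2 * PI - t)). nra.
    + assert (1 <= IZR k) by (apply IZR_le; lia). rewrite Rabs_left1 by nra.
      pose proof (Rmin_r t (2 * PI - t)). nra.
  - intros bb Hb.
    assert (E0 : exists k : Z, t = Rabs (t - 2 * PI * IZR k)).
    { exists 0%Z. replace (t - 2 * PI * IZR 0) with t by ring. rewrite Rabs_pos_eq by lra. reflexivity. }
    assert (E1 : exists k : Z, 2 * PI - t = Rabs (t - 2 * PI * IZR k)).
    { exists 1%Z. replace (t - 2 * PI * IZR 1) with (t - 2 * PI) by ring. rewrite Rabs_left1 by lra. ring. }
    assert (B1 := Hb t E0). assert (B2 := Hb _ E1).
    destruct bb as [bb| |]; simpl in *; auto.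
    apply Rmin_case; auto.
Qed.

Lemma dist_shift u k : dist2piZ (u + 2 * PI * IZR k) = dist2piZ u.
Proof.
  unfold dist2piZ. f_equal. apply Glb_Rbar_eqset. intros x. split.
  - intros [j ->]. exists (j - k)%Z. rewrite minus_IZR. f_equal. ring.
  - intros [j ->]. exists (j + k)%Z. rewrite plus_IZR. f_equal. ring.
Qed.

Lemma dist_neg u : dist2piZ (- u) = dist2piZ u.
Proof.
  unfold dist2piZ. f_equal. apply Glb_Rbar_eqset. intros x. split.
  - intros [j ->]. exists (- j)%Z. rewrite opp_IZR. rewrite <- Rabs_Ropp. f_equal. ring.
  - intros [j ->]. exists (- j)%Z. rewrite opp_IZR. rewrite <- Rabs_Ropp. f_equal. ring.
Qed.

Lemma theta_ex t : 0 <= t < 2 * PI -> exists th (n : Z), t = th + 2 * PI * IZR n /\ Rabs th = dist2piZ t.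
Proof.
  intros Ht. rewrite dist_min by auto. pose proof PI_RGT_0.
  destruct (Rle_dec t PI).
  - exists t, 0%Z. simpl. split; [ring|]. rewrite Rabs_pos_eq by lra. rewrite Rmin_left by lra. auto.
  - exists (t - 2 * PI), 1%Z. simpl. split; [ring|]. rewrite Rabs_left1 by lra. rewrite Rmin_right by lra. ring.
Qed.

Lemma cs3 a0 a1 a2 b0 b1 b2 : 0 <= a0 -> 0 <= a1 -> 0 <= a2 -> 0 <= b0 -> 0 <= b1 -> 0 <= b2 ->
  a0 * b0 + a1 * b1 + a2 * b2 <= sqrt (a0 ^ 2 + a1 ^ 2 + a2 ^ 2) * sqrt (b0 ^ 2 + b1 ^ 2 + b2 ^ 2).
Proof.
  intros. rewrite <- sqrt_mult_alt by (pose proof (pow2_ge_0 a0); pose proof (pow2_ge_0 a1); pose proof (pow2_ge_0 a2); lra).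
  rewrite <- (sqrt_pow2 (a0 * b0 + a1 * b1 + a2 * b2)) by nra.
  apply sqrt_le_1_alt.
  pose proof (Rle_0_sqr (a0 * b1 - a1 * b0)). pose proof (Rle_0_sqr (a0 * b2 - a2 * b0)). pose proof (Rle_0_sqr (a1 * b2 - a2 * b1)).
  unfold Rsqr in *. simpl. nra.
Qed.

Lemma re_path (z : C) (s th : R) : RtoC (Re (z + RtoC s * RtoC th)%C) = (RtoC (Re z) + RtoC s * RtoC th)%C.
Proof. destruct z. unfold RtoC, Cplus, Cmult; simpl. f_equal; ring. Qed.

Lemma im_path (z : C) (s th : R) : Im (z + RtoC s * RtoC th)%C = Im z.
Proof. destruct z. unfold RtoC, Cplus, Cmult; simpl. ring. Qed.

Lemma z_decomp (z : C) (s th : R) : (RtoC (Re z) + RtoC s * RtoC th + RtoC 1 * (Ci * RtoC (Im z)))%C = (z + RtoC s * RtoC th)%C.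
Proof. destruct z. unfold RtoC, Cplus, Cmult, Ci; simpl. f_equal; ring. Qed.

Lemma im_path2 (z : C) (s th tau : R) : Im (RtoC (Re z) + RtoC s * RtoC th + RtoC tau * (Ci * RtoC (Im z)))%C = tau * Im z.
Proof. destruct z. unfold RtoC, Cplus, Cmult, Ci; simpl. ring. Qed.

Lemma C_sq_diff (A0 A1 A2 B0 B1 B2 : C) :
  (A0 ^ 2 + A1 ^ 2 + A2 ^ 2)%C = (B0 ^ 2 + B1 ^ 2 + B2 ^ 2 + ((A0 - B0) * (A0 + B0) + (A1 - B1) * (A1 + B1) + (A2 - B2) * (A2 + B2)))%C.
Proof. ring. Qed.

Lemma RtoC_sum3 (a b c : R) : (RtoC a ^ 2 + RtoC b ^ 2 + RtoC c ^ 2)%C = RtoC (a ^ 2 + b ^ 2 + c ^ 2).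
Proof. rewrite !RtoC_plus, !RtoC_pow. reflexivity. Qed.

Section Final.
Variables (G : nat -> C -> C -> C) (D : nat -> nat -> C -> C -> C) (H : nat -> nat -> nat -> C -> C -> C)
  (C0 R0 b : R) (U : C -> C -> Prop) (r M : R).
Hypothesis HR0 : 0 < R0.
Hypothesis HUs : forall z0 z1, inWcl R0 z0 -> inWcl R0 z1 -> U z0 z1.
Hypothesis HUd : forall j, (j < 3)%nat ->
       cdiff2_on U (G j) (D j 0%nat) (D j 1%nat) /\
       cdiff2_on U (D j 0%nat) (H j 0%nat 0%nat) (H j 0%nat 1%nat) /\
       cdiff2_on U (D j 1%nat) (H j 1%nat 0%nat) (H j 1%nat 1%nat).
Hypothesis Hper : forall j z0 z1, (j < 3)%nat -> inWcl R0 z0 -> inWcl R0 z1 ->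
     G j (z0 + RtoC (2 * PI))%C z1 = G j z0 z1 /\ G j z0 (z1 + RtoC (2 * PI))%C = G j z0 z1.
Hypothesis HB : BoxB D R0 U r M.

Lemma inW_R x : inW R0 (RtoC x).
Proof. unfold inW; simpl. rewrite Rabs_R0. lra. Qed.

Lemma M0j_prop j : (j < 3)%nat -> 0 <= M0j R0 (D j 0%nat) (D j 1%nat) /\ forall z0 z1, inW R0 z0 -> inW R0 z1 ->
  vnorm2 (D j 0%nat z0 z1 + D j 0%nat (RtoC (Re z0)) (RtoC (Re z1)))%C (D j 1%nat z0 z1 + D j 1%nat (RtoC (Re z0)) (RtoC (Re z1)))%C
   <= M0j R0 (D j 0%nat) (D j 1%nat).
Proof.
  intros Hj. unfold M0j.
  match goal with |- context [Lub_Rbar ?E] => set (EE := E) end.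
  assert (Hb : forall y, EE y -> y <= 4 * M).
  { intros y [z0 [z1 [H0 [H1 ->]]]]. eapply Rle_trans; [apply vnorm2_le|].
    pose proof (Cmod_triangle (D j 0%nat z0 z1) (D j 0%nat (RtoC (Re z0)) (RtoC (Re z1)))).
    pose proof (Cmod_triangle (D j 1%nat z0 z1) (D j 1%nat (RtoC (Re z0)) (RtoC (Re z1)))).
    pose proof (D_strip G D H R0 U HUs HUd Hper r M HB j 0 z0 z1 Hj ltac:(lia) H0 H1).
    pose proof (D_strip G D H R0 U HUs HUd Hper r M HB j 1 z0 z1 Hj ltac:(lia) H0 H1).
    pose proof (D_strip G D H R0 U HUs HUd Hper r M HB j 0 _ _ Hj ltac:(lia) (inW_R (Re z0)) (inW_R (Re z1))).
    pose proof (D_strip G D H R0 U HUs HUd Hper r M HB j 1 _ _ Hj ltac:(lia) (inW_R (Re z0)) (inW_R (Re z1))).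
    lra. }
  split.
  - assert (HE : EE (vnorm2 (D j 0%nat 0 0 + D j 0%nat (RtoC (Re 0)) (RtoC (Re 0)))%C (D j 1%nat 0 0 + D j 1%nat (RtoC (Re 0)) (RtoC (Re 0)))%C)).
    { exists 0%C, 0%C. repeat split; apply inW_R. }
    destruct (lub_finite EE _ _ HE Hb). pose proof (vnorm2_ge0 (D j 0%nat 0 0 + D j 0%nat (RtoC (Re 0)) (RtoC (Re 0)))%C (D j 1%nat 0 0 + D j 1%nat (RtoC (Re 0)) (RtoC (Re 0)))%C). lra.
  - intros z0 z1 H0 H1.
    assert (HE : EE (vnorm2 (D j 0%nat z0 z1 + D j 0%nat (RtoC (Re z0)) (RtoC (Re z1)))%C (D j 1%nat z0 z1 + D j 1%nat (RtoC (Re z0)) (RtoC (Re z1)))%C)).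
    { exists z0, z1. repeat split; auto. }
    destruct (lub_finite EE _ _ HE Hb). auto.
Qed.

Lemma M1j_prop j : (j < 3)%nat -> 0 <= M1j R0 (H j) /\ forall z0 z1, inW R0 z0 -> inW R0 z1 ->
  mxnorm2 (H j 0%nat 0%nat z0 z1) (H j 0%nat 1%nat z0 z1) (H j 1%nat 0%nat z0 z1) (H j 1%nat 1%nat z0 z1) <= M1j R0 (H j).
Proof.
  intros Hj. unfold M1j.
  match goal with |- context [Lub_Rbar ?E] => set (EE := E) end.
  assert (Hb : forall y, EE y -> y <= 4 * (4 * M / r)).
  { intros y [z0 [z1 [H0 [H1 ->]]]]. eapply Rle_trans; [apply mxnorm2_le|].
    pose proof (H_strip G D H R0 U HUs HUd Hper r M HB j 0 0 z0 z1 Hj ltac:(lia) ltac:(lia) H0 H1).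
    pose proof (H_strip G D H R0 U HUs HUd Hper r M HB j 0 1 z0 z1 Hj ltac:(lia) ltac:(lia) H0 H1).
    pose proof (H_strip G D H R0 U HUs HUd Hper r M HB j 1 0 z0 z1 Hj ltac:(lia) ltac:(lia) H0 H1).
    pose proof (H_strip G D H R0 U HUs HUd Hper r M HB j 1 1 z0 z1 Hj ltac:(lia) ltac:(lia) H0 H1).
    lra. }
  split.
  - assert (HE : EE (mxnorm2 (H j 0%nat 0%nat 0 0) (H j 0%nat 1%nat 0 0) (H j 1%nat 0%nat 0 0) (H j 1%nat 1%nat 0 0))).
    { exists 0%C, 0%C. repeat split; apply inW_R. }
    destruct (lub_finite EE _ _ HE Hb). pose proof (mxnorm2_le (H j 0%nat 0%nat 0 0) (H j 0%nat 1%nat 0 0) (H j 1%nat 0%nat 0 0) (H j 1%nat 1%nat 0 0)). lra.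
  - intros z0 z1 H0 H1.
    assert (HE : EE (mxnorm2 (H j 0%nat 0%nat z0 z1) (H j 0%nat 1%nat z0 z1) (H j 1%nat 0%nat z0 z1) (H j 1%nat 1%nat z0 z1))).
    { exists z0, z1. repeat split; auto. }
    destruct (lub_finite EE _ _ HE Hb). auto.
Qed.

Lemma U_of_W z0 z1 : inW R0 z0 -> inW R0 z1 -> U z0 z1.
Proof. intros. apply HUs; unfold inW, inWcl in *; lra. Qed.

Lemma inW_path z s th : inW R0 z -> inW R0 (z + RtoC s * RtoC th)%C.
Proof. unfold inW. rewrite im_path. auto. Qed.

Lemma est_plus j z0 z1 (th0 th1 : R) : (j < 3)%nat -> inW R0 z0 -> inW R0 z1 ->
  Cmod ((G j z0 z1 - G j (z0 + RtoC th0)%C (z1 + RtoC th1)%C) +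
        (G j (RtoC (Re z0)) (RtoC (Re z1)) - G j (RtoC (Re z0) + RtoC th0)%C (RtoC (Re z1) + RtoC th1)%C))%C
  <= M0j R0 (D j 0%nat) (D j 1%nat) * sqrt (th0 ^ 2 + th1 ^ 2).
Proof.
  intros Hj H0 H1. destruct (HUd j Hj) as [Cg _]. destruct (M0j_prop j Hj) as [Mpos Mb].
  pose proof (inW_R (Re z0)) as X0. pose proof (inW_R (Re z1)) as X1.
  set (x0 := RtoC (Re z0)) in *. set (x1 := RtoC (Re z1)) in *.
  set (phi := fun u : R => (1 * G j (z0 + RtoC u * RtoC th0)%C (z1 + RtoC u * RtoC th1)%C
                           + 1 * G j (x0 + RtoC u * RtoC th0)%C (x1 + RtoC u * RtoC th1)%C)%C).
  set (phi' := fun u : R => (1 * (D j 0%nat (z0 + RtoC u * RtoC th0)%C (z1 + RtoC u * RtoC th1)%C * RtoC th0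
                                  + D j 1%nat (z0 + RtoC u * RtoC th0)%C (z1 + RtoC u * RtoC th1)%C * RtoC th1)
                           + 1 * (D j 0%nat (x0 + RtoC u * RtoC th0)%C (x1 + RtoC u * RtoC th1)%C * RtoC th0
                                  + D j 1%nat (x0 + RtoC u * RtoC th0)%C (x1 + RtoC u * RtoC th1)%C * RtoC th1))%C).
  assert (Hm : Cmod (phi 1 - phi 0)%C <= M0j R0 (D j 0%nat) (D j 1%nat) * sqrt (th0 ^ 2 + th1 ^ 2)).
  { apply mvt_C with phi'.
    - intros s Hs. unfold phi, phi'. apply hasderR_comb; eapply hasderR_chain; eauto; apply U_of_W; apply inW_path; auto.
    - intros s Hs. unfold phi'.
      match goal with |- Cmod ?X <= _ => replace X with
        ((D j 0%nat (z0 + RtoC s * RtoC th0)%C (z1 + RtoC s * RtoC th1)%C + D j 0%nat (x0 + RtoC s * RtoC th0)%C (x1 + RtoC s * RtoC th1)%C) * RtoC th0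
        + (D j 1%nat (z0 + RtoC s * RtoC th0)%C (z1 + RtoC s * RtoC th1)%C + D j 1%nat (x0 + RtoC s * RtoC th0)%C (x1 + RtoC s * RtoC th1)%C) * RtoC th1)%C by ring end.
      eapply Rle_trans; [apply CS_C|]. apply Rmult_le_compat_r; [apply sqrt_pos|].
      unfold x0, x1. rewrite <- !re_path. apply Mb; apply inW_path; auto. }
  replace (phi 1 - phi 0)%C with (- ((G j z0 z1 - G j (z0 + RtoC th0)%C (z1 + RtoC th1)%C) +
        (G j x0 x1 - G j (x0 + RtoC th0)%C (x1 + RtoC th1)%C)))%C in Hm.
  2:{ unfold phi.
      replace (z0 + RtoC 1 * RtoC th0)%C with (z0 + RtoC th0)%C by ring.
      replace (z1 + RtoC 1 * RtoC th1)%C with (z1 + RtoC th1)%C by ring.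
      replace (x0 + RtoC 1 * RtoC th0)%C with (x0 + RtoC th0)%C by ring.
      replace (x1 + RtoC 1 * RtoC th1)%C with (x1 + RtoC th1)%C by ring.
      replace (z0 + RtoC 0 * RtoC th0)%C with z0 by ring.
      replace (z1 + RtoC 0 * RtoC th1)%C with z1 by ring.
      replace (x0 + RtoC 0 * RtoC th0)%C with x0 by ring.
      replace (x1 + RtoC 0 * RtoC th1)%C with x1 by ring.
      ring. }
  rewrite Cmod_opp in Hm. exact Hm.
Qed.

Lemma vnorm2_Ci (y0 y1 : R) : vnorm2 (Ci * RtoC y0)%C (Ci * RtoC y1)%C = sqrt (y0 ^ 2 + y1 ^ 2).
Proof. rewrite vnorm2_scal, Cmod_Ci, Rmult_1_l. unfold vnorm2. rewrite !Cmod_R, !pow2_abs. reflexivity. Qed.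

Lemma est_minus j z0 z1 (th0 th1 : R) : (j < 3)%nat -> inW R0 z0 -> inW R0 z1 ->
  Cmod ((G j z0 z1 - G j (z0 + RtoC th0)%C (z1 + RtoC th1)%C) -
        (G j (RtoC (Re z0)) (RtoC (Re z1)) - G j (RtoC (Re z0) + RtoC th0)%C (RtoC (Re z1) + RtoC th1)%C))%C
  <= M1j R0 (H j) * sqrt (Im z0 ^ 2 + Im z1 ^ 2) * sqrt (th0 ^ 2 + th1 ^ 2).
Proof.
  intros Hj H0 H1. destruct (HUd j Hj) as [Cg [Cd0 Cd1]]. destruct (M1j_prop j Hj) as [Mpos Mb].
  pose proof (inW_R (Re z0)) as X0. pose proof (inW_R (Re z1)) as X1.
  set (Y := sqrt (Im z0 ^ 2 + Im z1 ^ 2)). set (T := sqrt (th0 ^ 2 + th1 ^ 2)).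
  assert (HY : 0 <= Y) by apply sqrt_pos. assert (HT : 0 <= T) by apply sqrt_pos.
  set (x0 := RtoC (Re z0)) in *. set (x1 := RtoC (Re z1)) in *.
  set (phi := fun u : R => (1 * G j (z0 + RtoC u * RtoC th0)%C (z1 + RtoC u * RtoC th1)%C
                           + (-1) * G j (x0 + RtoC u * RtoC th0)%C (x1 + RtoC u * RtoC th1)%C)%C).
  set (phi' := fun u : R => (1 * (D j 0%nat (z0 + RtoC u * RtoC th0)%C (z1 + RtoC u * RtoC th1)%C * RtoC th0
                                  + D j 1%nat (z0 + RtoC u * RtoC th0)%C (z1 + RtoC u * RtoC th1)%C * RtoC th1)
                           + (-1) * (D j 0%nat (x0 + RtoC u * RtoC th0)%C (x1 + RtoC u * RtoC th1)%C * RtoC th0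
                                  + D j 1%nat (x0 + RtoC u * RtoC th0)%C (x1 + RtoC u * RtoC th1)%C * RtoC th1))%C).
  assert (Hm : Cmod (phi 1 - phi 0)%C <= M1j R0 (H j) * Y * T).
  { apply mvt_C with phi'.
    - intros s Hs. unfold phi, phi'. apply hasderR_comb; eapply hasderR_chain; eauto; apply U_of_W; apply inW_path; auto.
    - intros s Hs.
      set (q0 := (Ci * RtoC (Im z0))%C). set (q1 := (Ci * RtoC (Im z1))%C).
      set (P0 := (x0 + RtoC s * RtoC th0)%C). set (P1 := (x1 + RtoC s * RtoC th1)%C).
      set (psi := fun u : R => (RtoC th0 * D j 0%nat (P0 + RtoC u * q0)%C (P1 + RtoC u * q1)%C
                              + RtoC th1 * D j 1%nat (P0 + RtoC u * q0)%C (P1 + RtoC u * q1)%C)%C).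
      set (psi' := fun u : R => (RtoC th0 * (H j 0%nat 0%nat (P0 + RtoC u * q0)%C (P1 + RtoC u * q1)%C * q0
                                              + H j 0%nat 1%nat (P0 + RtoC u * q0)%C (P1 + RtoC u * q1)%C * q1)
                               + RtoC th1 * (H j 1%nat 0%nat (P0 + RtoC u * q0)%C (P1 + RtoC u * q1)%C * q0
                                              + H j 1%nat 1%nat (P0 + RtoC u * q0)%C (P1 + RtoC u * q1)%C * q1))%C).
      assert (InQ : forall u, 0 <= u <= 1 -> inW R0 (P0 + RtoC u * q0)%C /\ inW R0 (P1 + RtoC u * q1)%C).
      { intros u Hu. unfold inW in *. unfold P0, P1, q0, q1, x0, x1. rewrite !im_path2.
        rewrite !Rabs_mult, (Rabs_pos_eq u) by lra. pose proof (Rabs_pos (Im z0)); pose proof (Rabs_pos (Im z1)). split; nra. }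
      assert (Hp : Cmod (psi 1 - psi 0)%C <= M1j R0 (H j) * Y * T).
      { apply mvt_C with psi'.
        - intros u Hu. destruct (InQ u Hu). unfold psi, psi'. apply hasderR_comb; eapply hasderR_chain; eauto; apply U_of_W; auto.
        - intros u Hu. destruct (InQ u Hu) as [Q0 Q1]. unfold psi'.
          set (Q0' := (P0 + RtoC u * q0)%C) in *. set (Q1' := (P1 + RtoC u * q1)%C) in *.
          match goal with |- Cmod ?X <= _ => replace X with
            ((H j 0%nat 0%nat Q0' Q1' * q0 + H j 0%nat 1%nat Q0' Q1' * q1) * RtoC th0
             + (H j 1%nat 0%nat Q0' Q1' * q0 + H j 1%nat 1%nat Q0' Q1' * q1) * RtoC th1)%C by ring end.
          eapply Rle_trans; [apply CS_C|]. fold T. apply Rmult_le_compat_r; auto.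
          eapply Rle_trans; [apply mxnorm2_apply|]. unfold q0, q1. rewrite vnorm2_Ci. fold Y.
          apply Rmult_le_compat_r; auto. }
      replace (psi 1 - psi 0)%C with (phi' s) in Hp; [exact Hp|].
      unfold psi, phi', P0, P1, q0, q1, x0, x1. rewrite !z_decomp.
      replace (RtoC (Re z0) + RtoC s * RtoC th0 + RtoC 0 * (Ci * RtoC (Im z0)))%C with (RtoC (Re z0) + RtoC s * RtoC th0)%C by ring.
      replace (RtoC (Re z1) + RtoC s * RtoC th1 + RtoC 0 * (Ci * RtoC (Im z1)))%C with (RtoC (Re z1) + RtoC s * RtoC th1)%C by ring.
      ring. }
  replace (phi 1 - phi 0)%C with (- ((G j z0 z1 - G j (z0 + RtoC th0)%C (z1 + RtoC th1)%C) -
        (G j x0 x1 - G j (x0 + RtoC th0)%C (x1 + RtoC th1)%C)))%C in Hm.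
  2:{ unfold phi.
      replace (z0 + RtoC 1 * RtoC th0)%C with (z0 + RtoC th0)%C by ring.
      replace (z1 + RtoC 1 * RtoC th1)%C with (z1 + RtoC th1)%C by ring.
      replace (x0 + RtoC 1 * RtoC th0)%C with (x0 + RtoC th0)%C by ring.
      replace (x1 + RtoC 1 * RtoC th1)%C with (x1 + RtoC th1)%C by ring.
      replace (z0 + RtoC 0 * RtoC th0)%C with z0 by ring.
      replace (z1 + RtoC 0 * RtoC th1)%C with z1 by ring.
      replace (x0 + RtoC 0 * RtoC th0)%C with x0 by ring.
      replace (x1 + RtoC 0 * RtoC th1)%C with x1 by ring.
      ring. }
  rewrite Cmod_opp in Hm. exact Hm.
Qed.
End Final.


Lemma G_real (G : nat -> C -> C -> C) j a b : Im (G j (RtoC a) (RtoC b)) = 0 -> G j (RtoC a) (RtoC b) = RtoC (gam G j a b).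
Proof. intros Hi. unfold gam. destruct (G j (RtoC a) (RtoC b)) as [p q]. simpl in *. subst. reflexivity. Qed.

Lemma gam_per (G : nat -> C -> C -> C) R0 j a b (n m : Z) : 0 < R0 -> periodicW R0 (G j) ->
  gam G j (a + 2 * PI * IZR n) (b + 2 * PI * IZR m) = gam G j a b.
Proof.
  intros HR Hp. unfold gam. rewrite !RtoC_plus. rewrite (per_Z R0); auto; unfold inW; simpl; rewrite Rabs_R0; lra.
Qed.

Theorem lemma2
  (G : nat -> C -> C -> C)              (* analytic extensions gamma_0, gamma_1, gamma_2 *)
  (D : nat -> nat -> C -> C -> C)       (* D j k = d gamma_j / d z_k *)
  (H : nat -> nat -> nat -> C -> C -> C) (* H j k l = d^2 gamma_j / dz_k dz_l *)
  (C0 R0 b : R)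
  (* Gamma is real-valued and 2pi-biperiodic on R^2 *)
  (Hreal : forall j t0 t1, (j < 3)%nat -> Im (G j (RtoC t0) (RtoC t1)) = 0)
  (Hper_real : forall j t0 t1, (j < 3)%nat ->
     gam G j (t0 + 2 * PI) t1 = gam G j t0 t1 /\ gam G j t0 (t1 + 2 * PI) = gam G j t0 t1)
  (* (A1) *)
  (HC0 : 0 < C0)
  (HA1 : forall t0 t1 s0 s1, inI2pi t0 -> inI2pi t1 -> inI2pi s0 -> inI2pi s1 ->
     gdist G t0 t1 s0 s1 >= C0 * zeta (t0 - s0) (t1 - s1))
  (* (A2) *)
  (HR0 : 0 < R0)
  (HA2 : exists U : C -> C -> Prop, openC2 U /\
     (forall z0 z1, inWcl R0 z0 -> inWcl R0 z1 -> U z0 z1) /\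
     forall j, (j < 3)%nat ->
       cdiff2_on U (G j) (D j 0%nat) (D j 1%nat) /\
       cdiff2_on U (D j 0%nat) (H j 0%nat 0%nat) (H j 0%nat 1%nat) /\
       cdiff2_on U (D j 1%nat) (H j 1%nat 0%nat) (H j 1%nat 1%nat))
  (* the extension is still 2pi-biperiodic on the closed strip *)
  (Hper : forall j z0 z1, (j < 3)%nat -> inWcl R0 z0 -> inWcl R0 z1 ->
     G j (z0 + RtoC (2 * PI))%C z1 = G j z0 z1 /\ G j z0 (z1 + RtoC (2 * PI))%C = G j z0 z1)
  (* choice of b *)
  (Hb : 0 < b < bmax C0 R0 (Mbig0 R0 D) (Mbig1 R0 H)) :
  forall (z0 z1 : C) (t0 t1 : R),
    inW (bstar b C0 R0 (Mbig0 R0 D) (Mbig1 R0 H)) z0 ->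
    inW (bstar b C0 R0 (Mbig0 R0 D) (Mbig1 R0 H)) z1 ->
    inI2pi t0 -> inI2pi t1 ->
    Cmod (dfun G z0 z1 t0 t1) >= Cone b C0 R0 (Mbig0 R0 D) (Mbig1 R0 H) * (zeta t0 t1) ^ 2.
Proof.
  intros z0 z1 t0 t1 Hz0 Hz1 Ht0 Ht1.
  destruct HA2 as [U [HUo [HUs HUd]]].
  destruct (BoxB_ex G D H R0 U HR0 HUo HUs HUd) as [r [M HB]].
  pose proof PI_RGT_0 as HPI.
  set (M0 := Mbig0 R0 D) in *. set (M1 := Mbig1 R0 H) in *.
  set (bs := bstar b C0 R0 M0 M1) in *.
  assert (Hbs : 0 < bs < R0).
  { unfold bs, bstar. unfold bmax in *. pose proof (Rmin_r (C0 ^ 2 / (sqrt 2 * M0 * M1)) (R0 / 2)). lra. }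
  assert (W0 : inW R0 z0) by (unfold inW in *; lra).
  assert (W1 : inW R0 z1) by (unfold inW in *; lra).
  destruct (theta_ex t0 Ht0) as [th0 [n0 [Et0 Dt0]]].
  destruct (theta_ex t1 Ht1) as [th1 [n1 [Et1 Dt1]]].
  set (T := sqrt (th0 ^ 2 + th1 ^ 2)).
  assert (ET : zeta t0 t1 = T).
  { unfold zeta, T. rewrite <- Dt0, <- Dt1, !pow2_abs. reflexivity. }
  rewrite ET.
  assert (Gs : forall j, (j < 3)%nat -> G j (z0 + RtoC t0)%C (z1 + RtoC t1)%C = G j (z0 + RtoC th0)%C (z1 + RtoC th1)%C).
  { intros j Hj. rewrite Et0, Et1, !RtoC_plus.
    replace (z0 + (RtoC th0 + RtoC (2 * PI * IZR n0)))%C with (z0 + RtoC th0 + RtoC (2 * PI * IZR n0))%C by ring.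
    replace (z1 + (RtoC th1 + RtoC (2 * PI * IZR n1)))%C with (z1 + RtoC th1 + RtoC (2 * PI * IZR n1))%C by ring.
    apply (per_Z R0). apply per_G; auto.
    - unfold inW in *. rewrite Im_shift. auto.
    - unfold inW in *. rewrite Im_shift. auto. }
  unfold dfun. rewrite !Gs by lia.
  set (x0 := RtoC (Re z0)). set (x1 := RtoC (Re z1)).
  set (A0 := (G 0%nat z0 z1 - G 0%nat (z0 + RtoC th0)%C (z1 + RtoC th1)%C)%C).
  set (A1 := (G 1%nat z0 z1 - G 1%nat (z0 + RtoC th0)%C (z1 + RtoC th1)%C)%C).
  set (A2 := (G 2%nat z0 z1 - G 2%nat (z0 + RtoC th0)%C (z1 + RtoC th1)%C)%C).
  set (B0 := (G 0%nat x0 x1 - G 0%nat (x0 + RtoC th0)%C (x1 + RtoC th1)%C)%C).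
  set (B1 := (G 1%nat x0 x1 - G 1%nat (x0 + RtoC th0)%C (x1 + RtoC th1)%C)%C).
  set (B2 := (G 2%nat x0 x1 - G 2%nat (x0 + RtoC th0)%C (x1 + RtoC th1)%C)%C).
  rewrite (C_sq_diff A0 A1 A2 B0 B1 B2).
  set (a0 := Re z0). set (a1 := Re z1). set (c0 := a0 + th0). set (c1 := a1 + th1).
  assert (HBsum : (B0 ^ 2 + B1 ^ 2 + B2 ^ 2)%C = RtoC (gdist G a0 a1 c0 c1 ^ 2)).
  { unfold B0, B1, B2, x0, x1. rewrite <- !RtoC_plus. fold a0 a1 c0 c1.
    rewrite !G_real by (apply Hreal; lia). rewrite <- !RtoC_minus. rewrite RtoC_sum3.
    unfold gdist. rewrite pow2_sqrt; [reflexivity|].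
    pose proof (pow2_ge_0 (gam G 0 a0 a1 - gam G 0 c0 c1)). pose proof (pow2_ge_0 (gam G 1 a0 a1 - gam G 1 c0 c1)).
    pose proof (pow2_ge_0 (gam G 2 a0 a1 - gam G 2 c0 c1)). lra. }
  assert (Hi : C0 ^ 2 * T ^ 2 <= Cmod (B0 ^ 2 + B1 ^ 2 + B2 ^ 2)%C).
  { rewrite HBsum, Cmod_R, Rabs_pos_eq by apply pow2_ge_0.
    destruct (reduce_real a0) as [p0 Hp0]. destruct (reduce_real a1) as [p1 Hp1].
    destruct (reduce_real c0) as [q0 Hq0]. destruct (reduce_real c1) as [q1 Hq1].
    assert (Egd : gdist G (a0 + 2 * PI * IZR p0) (a1 + 2 * PI * IZR p1) (c0 + 2 * PI * IZR q0) (c1 + 2 * PI * IZR q1)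
                  = gdist G a0 a1 c0 c1).
    { unfold gdist. rewrite !(gam_per G R0) by (auto; apply per_G; auto; lia). reflexivity. }
    pose proof (HA1 _ _ _ _ Hp0 Hp1 Hq0 Hq1) as HA. rewrite Egd in HA.
    assert (Ez : zeta (a0 + 2 * PI * IZR p0 - (c0 + 2 * PI * IZR q0)) (a1 + 2 * PI * IZR p1 - (c1 + 2 * PI * IZR q1)) = T).
    { rewrite <- ET. unfold zeta. f_equal.
      replace (a0 + 2 * PI * IZR p0 - (c0 + 2 * PI * IZR q0)) with (- th0 + 2 * PI * IZR (p0 - q0)) by (unfold c0; rewrite minus_IZR; ring).
      replace (a1 + 2 * PI * IZR p1 - (c1 + 2 * PI * IZR q1)) with (- th1 + 2 * PI * IZR (p1 - q1)) by (unfold c1; rewrite minus_IZR; ring).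
      rewrite !dist_shift, !dist_neg. rewrite Et0, Et1, !dist_shift. reflexivity. }
    rewrite Ez in HA.
    assert (0 <= T) by apply sqrt_pos.
    assert (0 <= C0 * T) by nra.
    apply Rge_le in HA.
    replace (C0 ^ 2 * T ^ 2) with ((C0 * T) ^ 2) by ring.
    apply pow_incr. lra. }
  assert (EP : forall j, (j < 3)%nat -> Cmod ((G j z0 z1 - G j (z0 + RtoC th0)%C (z1 + RtoC th1)%C) + (G j x0 x1 - G j (x0 + RtoC th0)%C (x1 + RtoC th1)%C))%C
     <= M0j R0 (D j 0%nat) (D j 1%nat) * T).
  { intros j Hj. apply (est_plus G D H R0 U r M HR0 HUs HUd Hper HB); auto. }
  assert (EM : forall j, (j < 3)%nat -> Cmod ((G j z0 z1 - G j (z0 + RtoC th0)%C (z1 + RtoC th1)%C) - (G j x0 x1 - G j (x0 + RtoC th0)%C (x1 + RtoC th1)%C))%C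
     <= M1j R0 (H j) * sqrt (Im z0 ^ 2 + Im z1 ^ 2) * T).
  { intros j Hj. apply (est_minus G D H R0 U r M HR0 HUs HUd Hper HB); auto. }
  set (Y := sqrt (Im z0 ^ 2 + Im z1 ^ 2)) in *.
  assert (HY0 : 0 <= Y) by apply sqrt_pos. assert (HT0 : 0 <= T) by apply sqrt_pos.
  assert (HY : Y <= sqrt 2 * bs).
  { unfold Y. rewrite <- (sqrt_pow2 bs) by lra. rewrite <- sqrt_mult_alt by lra. apply sqrt_le_1_alt.
    unfold inW in Hz0, Hz1. rewrite <- (pow2_abs (Im z0)), <- (pow2_abs (Im z1)).
    pose proof (Rabs_pos (Im z0)). pose proof (Rabs_pos (Im z1)). simpl. nra. }
  destruct (M0j_prop G D H R0 U r M HR0 HUs HUd Hper HB 0 ltac:(lia)) as [m00 _].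
  destruct (M0j_prop G D H R0 U r M HR0 HUs HUd Hper HB 1 ltac:(lia)) as [m01 _].
  destruct (M0j_prop G D H R0 U r M HR0 HUs HUd Hper HB 2 ltac:(lia)) as [m02 _].
  destruct (M1j_prop G D H R0 U r M HR0 HUs HUd Hper HB 0 ltac:(lia)) as [m10 _].
  destruct (M1j_prop G D H R0 U r M HR0 HUs HUd Hper HB 1 ltac:(lia)) as [m11 _].
  destruct (M1j_prop G D H R0 U r M HR0 HUs HUd Hper HB 2 ltac:(lia)) as [m12 _].
  set (a_0 := M0j R0 (D 0%nat 0%nat) (D 0%nat 1%nat)) in *. set (a_1 := M0j R0 (D 1%nat 0%nat) (D 1%nat 1%nat)) in *.
  set (a_2 := M0j R0 (D 2%nat 0%nat) (D 2%nat 1%nat)) in *.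
  set (b_0 := M1j R0 (H 0%nat)) in *. set (b_1 := M1j R0 (H 1%nat)) in *. set (b_2 := M1j R0 (H 2%nat)) in *.
  assert (CS : a_0 * b_0 + a_1 * b_1 + a_2 * b_2 <= M0 * M1).
  { unfold M0, M1, Mbig0, Mbig1. apply cs3; auto. }
  assert (HM0 : 0 <= M0) by (unfold M0, Mbig0; apply sqrt_pos).
  assert (HM1 : 0 <= M1) by (unfold M1, Mbig1; apply sqrt_pos).
  assert (Hprod : forall j, (j < 3)%nat -> forall (P Q : C), Cmod P <= M1j R0 (H j) * Y * T -> Cmod Q <= M0j R0 (D j 0%nat) (D j 1%nat) * T ->
     Cmod (P * Q)%C <= (M1j R0 (H j) * M0j R0 (D j 0%nat) (D j 1%nat)) * (Y * T ^ 2)).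
  { intros j Hj P Q HP HQ. rewrite Cmod_mult.
    eapply Rle_trans. apply Rmult_le_compat; try apply Cmod_ge_0; eauto. right. ring. }
  pose proof (Hprod 0%nat ltac:(lia) _ _ (EM 0%nat ltac:(lia)) (EP 0%nat ltac:(lia))) as P0.
  pose proof (Hprod 1%nat ltac:(lia) _ _ (EM 1%nat ltac:(lia)) (EP 1%nat ltac:(lia))) as P1.
  pose proof (Hprod 2%nat ltac:(lia) _ _ (EM 2%nat ltac:(lia)) (EP 2%nat ltac:(lia))) as P2.
  fold A0 B0 A1 B1 A2 B2 in P0, P1, P2.
  fold b_0 b_1 b_2 a_0 a_1 a_2 in P0, P1, P2.
  set (S := ((A0 - B0) * (A0 + B0) + (A1 - B1) * (A1 + B1) + (A2 - B2) * (A2 + B2))%C) in *.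
  assert (HS : Cmod S <= (a_0 * b_0 + a_1 * b_1 + a_2 * b_2) * (Y * T ^ 2)).
  { unfold S. eapply Rle_trans; [apply Cmod_triangle|].
    eapply Rle_trans; [apply Rplus_le_compat_r; apply Cmod_triangle|]. nra. }
  assert (Hrev : Cmod (B0 ^ 2 + B1 ^ 2 + B2 ^ 2)%C - Cmod S <= Cmod (B0 ^ 2 + B1 ^ 2 + B2 ^ 2 + S)%C).
  { pose proof (Cmod_triangle (B0 ^ 2 + B1 ^ 2 + B2 ^ 2 + S)%C (- S)%C). rewrite Cmod_opp in H0.
    replace (B0 ^ 2 + B1 ^ 2 + B2 ^ 2 + S + - S)%C with (B0 ^ 2 + B1 ^ 2 + B2 ^ 2)%C in H0 by ring. lra. }
  assert (Hfin : (a_0 * b_0 + a_1 * b_1 + a_2 * b_2) * (Y * T ^ 2) <= sqrt 2 * M0 * M1 * bs * T ^ 2).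
  { assert (0 <= T ^ 2) by apply pow2_ge_0.
    assert (0 <= a_0 * b_0 + a_1 * b_1 + a_2 * b_2) by nra.
    assert ((a_0 * b_0 + a_1 * b_1 + a_2 * b_2) * Y <= M0 * M1 * (sqrt 2 * bs)) by (apply Rmult_le_compat; auto).
    nra. }
  unfold Cone. fold bs. apply Rle_ge. nra.
Qed.
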